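(* Let $(X,d)$ be a (possibly extended) quasi-metric space and let $d'$ be either a rescaling $d'=\lambda d$ ($\lambda>0$) of $d$ or the involution $d'=d_o$ of $d$ at a point $o\in X$ which is not the point at infinity of $d$. Then $\dim_N(X,d)=\dim_N(X,d')$. In particular, if $M$ is an intrinsic Möbius structure on $X$ and $d,d'$ are any two quasi-metrics inducing $M$, then $\dim_N(X,d)=\dim_N(X,d')$, so $\dim_N(X,M):=\dim_N(X,d)$ (for any quasi-metric $d$ inducing $M$) is well defined; moreover $\dim_N(X,M)=\dim_N(X',M')$ whenever there is a Möbius equivalence between intrinsic Möbius spaces $(X,M)$ and $(X',M')$.
   Context: Let $X$ be a set with at least three points. A semi-metric is a symmetric map $d:X\times X\to[0,\infty)$ with $d(x,y)=0\iff x=y$. An extended semi-metric is a map $d:X\times X\to[0,\infty]$, symmetric with $d(x,y)=0\iff x=y$, for which there is exactly one point $\infty\in X$ (the point at infinity) with $d(x,\infty)=\infty$ for $x\neq\infty$ and $d(x,y)<\infty$ for $x,y\neq\infty$. For $K\ge1$, a (possibly extended) $K$-quasi-metric is a (possibly extended) semi-metric with $d(x,y)\le K\max(d(x,z),d(z,y))$ for all $x,y,z$; a quasi-metric is a $K$-quasi-metric for some $K$. Involution: for $o\in X$ other than the point at infinity, $d_o(x,x)=0$, $d_o(x,y)=\frac{d(x,y)}{d(x,o)d(o,y)}$ for distinct $x,y\ne\infty$, $d_o(\infty,y)=1/d(o,y)$ and $d_o(x,\infty)=1/d(x,o)$ for the respective distinct points, with $\lambda/0=\infty$ for $\lambda>0$.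 Nagata dimension of a (possibly extended) quasi-metric space $(X,d)$ (with point at infinity $\infty$, if any): diameters are taken with respect to $d$. A cover $\mathcal B$ of $X\setminus\{\infty\}$ is $C$-bounded if every $B\in\mathcal B$ has $\mathrm{diam}(B)\le C$. A family $\mathcal B$ of subsets has $s$-multiplicity $\le m$ if every $U\subset X$ with $\mathrm{diam}(U)\le s$ meets at most $m$ elements of $\mathcal B$. $\dim_N(X,d)$ is the infimum of all $n$ for which there is $c>0$ such that for every $s>0$ there is a $cs$-bounded cover of $X\setminus\{\infty\}$ with $s$-multiplicity $\le n+1$. Möbius structures: Admissible quadruples $\mathcal A_4$: quadruples in $X^4$ in which no point appears more than twice; non-degenerate means all entries distinct. Let $\overline\Delta=\{(a:b:c)\in\mathbb RP^2:a,b,c>0\}\cup\{(1:1:0),(1:0:1),(0:1:1)\}$. The cross-ratio triple of $d$ is $crt_d(wxyz)=(d(w,x)d(y,z):d(w,y)d(z,x):d(w,z)d(x,y))$, where infinite distances cancel: $crt_d(\infty xyz)=(d(y,z):d(z,x):d(x,y))$, $crt_d(\infty\infty yz)=(0:1:1)$, and analogously for permutations. Let $L_4=\{(x,y,z)\in\mathbb R^3:x+y+z=0\}$, $\overline{L_4}=L_4\cup\{(0,\infty,-\infty),(-\infty,0,\infty),(\infty,-\infty,0)\}$, $\overline\Phi:\overline\Delta\to\overline{L_4}$, $(a:b:c)\mapsto(\ln(b/c),\ln(c/a),\ln(a/b))$, extended by $(1:1:0)\mapsto(\infty,-\infty,0)$, $(1:0:1)\mapsto(-\infty,0,\infty)$,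 $(0:1:1)\mapsto(0,\infty,-\infty)$. Let $\varphi:\mathcal S_4\to\mathcal S_3$ be the homomorphism given by the induced permutation of the triple $((12)(34),(13)(42),(14)(23))$; $\mathcal S_3$ acts on $\overline{L_4}$ by permuting coordinates. A generalized Möbius structure is a map $M:\mathcal A_4\to\overline{L_4}$ with: (1) $M(\pi P)=\mathrm{sgn}(\pi)\varphi(\pi)M(P)$; (2) $M(P)\in L_4$ iff $P$ is non-degenerate; (3) $M(xxyz)=(0,\infty,-\infty)$; (4) for every admissible 5-tuple $(x,y,\omega,\alpha,\beta)$ with $(\omega,\alpha,\beta)$ non-degenerate, $\alpha\ne x\ne\beta$, $\alpha\ne y\ne\beta$, there is $\lambda\in\mathbb R\cup\{\pm\infty\}$ with $M(\alpha x\omega\beta)+M(\alpha\omega y\beta)-M(\alpha xy\beta)=(\lambda,-\lambda,0)$, the first component of the left side being well defined when $x\ne\beta$, $y\ne\alpha$ and the second when $x\ne\alpha$, $y\ne\beta$. Put $crt=\overline\Phi^{-1}\circ M$; $d$ induces $M$ if $crt=crt_d$. $M$ is intrinsic if the closure of the image of $crt$ in $\mathbb RP^2$ contains none of $(1:0:0),(0:1:0),(0:0:1)$. A Möbius equivalence is a bijection $f$ with $M'(f(w)f(x)f(y)f(z))=M(wxyz)$ for all admissible quadruples. *)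

(* Defs.v *)
From mathcomp Require Import all_boot fingroup perm.
From Stdlib Require Import Reals ClassicalEpsilon.
From Coquelicot Require Import Coquelicot.

Set Implicit Arguments.
Unset Strict Implicit.
Unset Printing Implicit Defensive.

Local Open Scope R_scope.

Section Defs.

Variable X : Type.
Implicit Types (d : X -> X -> Rbar).

Definition decP (P : Prop) : bool :=
  if excluded_middle_informative P then true else false.

Definition Rbar_max (a b : Rbar) : Rbar :=
  if decP (Rbar_lt a b) then b else a.

Definition at_least_three_points : Prop :=
  exists a b c : X, a <> b /\ b <> c /\ a <> c.

Definition is_inf d (x : X) : Prop := forall y, y <> x -> d y x = p_infty.

Definition semi_metric d : Prop :=
  (forall x y, d x y = d y x) /\
  (forall x y, is_finite (d x y) /\ Rbar_le (Finite 0) (d x y)) /\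
  (forall x y, d x y = Finite 0 <-> x = y).

Definition ext_semi_metric d : Prop :=
  (forall x y, d x y = d y x) /\
  (forall x y, Rbar_le (Finite 0) (d x y)) /\
  (forall x y, d x y = Finite 0 <-> x = y) /\
  (exists! p : X, (forall x, x <> p -> d x p = p_infty) /\
                  (forall x y, x <> p -> y <> p -> is_finite (d x y))).

Definition K_quasi_ineq (K : R) d : Prop :=
  forall x y z, Rbar_le (d x y) (Rbar_mult (Finite K) (Rbar_max (d x z) (d z y))).

Definition quasi_metric d : Prop :=
  (semi_metric d \/ ext_semi_metric d) /\
  exists K : R, 1 <= K /\ K_quasi_ineq K d.

Definition rescale (lam : R) d : X -> X -> Rbar :=
  fun x y => Rbar_mult (Finite lam) (d x y).

Definition divR (a b : R) : Rbar :=
  if decP (b = 0) then p_infty else Finite (a / b).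

Definition involution d (o : X) : X -> X -> Rbar :=
  fun x y =>
    if decP (x = y) then Finite 0
    else if decP (is_inf d x) then divR 1 (real (d o y))
    else if decP (is_inf d y) then divR 1 (real (d x o))
    else divR (real (d x y)) (real (d x o) * real (d o y)).

(* diameter (w.r.t. d), as a supremum in [-oo,+oo] (sup of the empty set is -oo) *)
Definition diam d (U : X -> Prop) : Rbar :=
  Rbar_lub (fun r => exists x y, U x /\ U y /\ r = d x y).

(* the family F (of subsets of X) has at most m elements *)
Definition at_most (m : nat) (F : (X -> Prop) -> Prop) : Prop :=
  forall f : nat -> (X -> Prop), (forall i, (i <= m)%nat -> F (f i)) ->
    exists i j, (i < j)%nat /\ (j <= m)%nat /\ f i = f j.

(* B is a cover of X \ {oo} (members are subsets of X \ {oo}) *)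
Definition cover_of_finite_part d (B : (X -> Prop) -> Prop) : Prop :=
  (forall U, B U -> forall x, U x -> ~ is_inf d x) /\
  (forall x, ~ is_inf d x -> exists U, B U /\ U x).

Definition bounded_cover d (C : R) (B : (X -> Prop) -> Prop) : Prop :=
  forall U, B U -> Rbar_le (diam d U) (Finite C).

Definition s_multiplicity_le d (s : R) (m : nat) (B : (X -> Prop) -> Prop) : Prop :=
  forall V : X -> Prop, Rbar_le (diam d V) (Finite s) ->
    at_most m (fun U => B U /\ exists x, U x /\ V x).

Definition nagata_witness d (n : nat) : Prop :=
  exists c : R, 0 < c /\
    forall s : R, 0 < s -> exists B : (X -> Prop) -> Prop,
      cover_of_finite_part d B /\ bounded_cover d (c * s) B /\
      s_multiplicity_le d s n.+1 B.

(* dim_N(X,d) = inf of all n admitting such c; +oo if there is none *)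
Definition dimN d : Rbar :=
  Rbar_glb (fun r => exists n : nat, r = Finite (INR n) /\ nagata_witness d n).

Definition quad := 'I_4 -> X.

Definition mkquad (a b c e : X) : quad :=
  fun i => match val i with 0 => a | 1 => b | 2 => c | _ => e end.

Definition mk5 (a b c e g : X) : 'I_5 -> X :=
  fun i => match val i with 0 => a | 1 => b | 2 => c | 3 => e | _ => g end.

(* no point appears more than twice *)
Definition admissible (n : nat) (P : 'I_n -> X) : Prop :=
  forall i j k : 'I_n, i <> j -> j <> k -> i <> k -> ~ (P i = P j /\ P j = P k).

Definition nondegenerate (P : quad) : Prop := injective P.

Definition get3 {T : Type} (v : T * T * T) (k : nat) : T :=
  match k with 0 => v.1.1 | 1 => v.1.2 | _ => v.2 end.

(* cross-ratio triple of d, as a representative in R^3 of the point of RP^2;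
   coordinates correspond to the pairings (12)(34), (13)(42), (14)(23).
   Infinite distances cancel: in each product d(u1,v1)d(u2,v2) every factor
   equal to oo (u<>v, one of them the point at infinity) is counted, and the
   common maximal power of oo is cancelled (products with fewer oo factors
   become 0). *)
Definition infpair d (u v : X) : bool := decP (u <> v /\ (is_inf d u \/ is_inf d v)).
Definition fpart d (u v : X) : R := if infpair d u v then 1 else real (d u v).
Definition ninf d (u v : X) : nat := if infpair d u v then 1%nat else 0%nat.

Definition crt_prod d (u1 v1 u2 v2 : X) : nat * R :=
  ((ninf d u1 v1 + ninf d u2 v2)%nat, fpart d u1 v1 * fpart d u2 v2).

Definition crt_d d (P : quad) : R * R * R :=
  let p0 := P (inord 0) in let p1 := P (inord 1) in
  let p2 := P (inord 2) in let p3 := P (inord 3) in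
  let A := crt_prod d p0 p1 p2 p3 in
  let B := crt_prod d p0 p2 p3 p1 in
  let C := crt_prod d p0 p3 p1 p2 in
  let m := maxn A.1 (maxn B.1 C.1) in
  ((if A.1 == m then A.2 else 0), (if B.1 == m then B.2 else 0),
   (if C.1 == m then C.2 else 0)).

(* \bar Phi : \bar Delta -> \bar L_4 on representatives *)
Definition Phibar (v : R * R * R) : Rbar * Rbar * Rbar :=
  let a := v.1.1 in let b := v.1.2 in let c := v.2 in
  if decP (0 < a /\ 0 < b /\ 0 < c) then
    (Finite (ln (b / c)), Finite (ln (c / a)), Finite (ln (a / b)))
  else if decP (c = 0) then (p_infty, m_infty, Finite 0)
  else if decP (b = 0) then (m_infty, Finite 0, p_infty)
  else (Finite 0, p_infty, m_infty).

(* \bar Phi^{-1}, with values normalised to the simplex a+b+c = 1 *)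
Definition Phibar_inv (v : Rbar * Rbar * Rbar) : R * R * R :=
  match v with
  | (Finite x, Finite y, Finite z) =>
      let s := 1 + exp (- z) + exp y in (1 / s, exp (- z) / s, exp y / s)
  | _ =>
    if decP (v = (p_infty, m_infty, Finite 0)) then (1/2, 1/2, 0)
    else if decP (v = (m_infty, Finite 0, p_infty)) then (1/2, 0, 1/2)
    else if decP (v = (Finite 0, p_infty, m_infty)) then (0, 1/2, 1/2)
    else (0, 0, 0)
  end.

Definition in_L4 (v : Rbar * Rbar * Rbar) : Prop :=
  exists x y z : R, v = (Finite x, Finite y, Finite z) /\ x + y + z = 0.

Definition in_L4bar (v : Rbar * Rbar * Rbar) : Prop :=
  in_L4 v \/ v = (Finite 0, p_infty, m_infty) \/ v = (m_infty, Finite 0, p_infty)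
  \/ v = (p_infty, m_infty, Finite 0).

(* phi : S_4 -> S_3, induced permutation of the pairings; pairing k is the
   one pairing position 0 with position k+1 *)
Definition pairing_index (i j : 'I_4) : nat :=
  if val i == 0%nat then (val j).-1
  else if val j == 0%nat then (val i).-1
  else (5 - val i - val j)%nat.

Definition phi (p : {perm 'I_4}) (k : nat) : nat :=
  pairing_index (p (inord 0)) (p (inord k.+1)).

Definition sgn_act (p : {perm 'I_4}) (r : Rbar) : Rbar :=
  if odd_perm p then Rbar_opp r else r.

(* the permuted quadruple pi P (entry P_j moved to position pi(j)) *)
Definition perm_quad (p : {perm 'I_4}) (P : quad) : quad :=
  fun i => P ((p^-1)%g i).

Definition opt_plus (a b : option Rbar) : option Rbar :=
  match a, b with Some x, Some y => Rbar_plus' x y | _, _ => None end.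

Definition mobius_structure (M : quad -> Rbar * Rbar * Rbar) : Prop :=
  (forall P, admissible P -> in_L4bar (M P)) /\
  (* (1) M(pi P) = sgn(pi) phi(pi) M(P), with S_3 permuting coordinates *)
  (forall (p : {perm 'I_4}) (P : quad), admissible P ->
     forall k, (k < 3)%nat ->
       get3 (M (perm_quad p P)) (phi p k) = sgn_act p (get3 (M P) k)) /\
  (forall P, admissible P -> (in_L4 (M P) <-> nondegenerate P)) /\
  (forall x y z, admissible (mkquad x x y z) ->
     M (mkquad x x y z) = (Finite 0, p_infty, m_infty)) /\
  (forall x y w a b : X, admissible (mk5 x y w a b) ->
     w <> a -> w <> b -> a <> b -> a <> x -> x <> b -> a <> y -> y <> b ->
     exists lam : Rbar,
       let S k := opt_plus (opt_plus (Some (get3 (M (mkquad a x w b)) k))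
                                     (Some (get3 (M (mkquad a w y b)) k)))
                           (Some (Rbar_opp (get3 (M (mkquad a x y b)) k))) in
       S 0%nat = Some lam /\ S 1%nat = Some (Rbar_opp lam) /\ S 2%nat = Some (Finite 0)).

(* crt = Phibar^{-1} o M coincides with crt_d *)
Definition induces d (M : quad -> Rbar * Rbar * Rbar) : Prop :=
  forall P, admissible P -> M P = Phibar (crt_d d P).

Definition sup_dist3 (u v : R * R * R) : R :=
  Rmax (Rabs (u.1.1 - v.1.1)) (Rmax (Rabs (u.1.2 - v.1.2)) (Rabs (u.2 - v.2))).

(* (1:0:0), (0:1:0), (0:0:1) are not in the closure of the image of crt *)
Definition intrinsic (M : quad -> Rbar * Rbar * Rbar) : Prop :=
  forall e, (e = (1, 0, 0) \/ e = (0, 1, 0) \/ e = (0, 0, 1)) ->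
    exists eps, 0 < eps /\
      forall P, admissible P -> eps <= sup_dist3 (Phibar_inv (M P)) e.

End Defs.

Definition mobius_equivalence (X X' : Type) (M : quad X -> Rbar * Rbar * Rbar)
  (M' : quad X' -> Rbar * Rbar * Rbar) (f : X -> X') : Prop :=
  bijective f /\
  forall P : quad X, admissible P -> M' (fun i => f (P i)) = M P.

(* Main.v *)
Require Import Defs.
From mathcomp Require Import all_boot fingroup perm.
From Stdlib Require Import Reals ClassicalEpsilon.
From Coquelicot Require Import Coquelicot.
From Stdlib Require Import Lra Classical FunctionalExtensionality PropExtensionality.
From Stdlib Require Import Lia.
From mathcomp Require Import zify.
Set Implicit Arguments.
Unset Strict Implicit.
Local Open Scope R_scope.

Lemma decP_T (P : Prop) : P -> Defs.decP P = true.
Proof. intro H; unfold Defs.decP; destruct (excluded_middle_informative P); [done|contradiction]. Qed.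
Lemma decP_F (P : Prop) : ~ P -> Defs.decP P = false.
Proof. intro H; unfold Defs.decP; destruct (excluded_middle_informative P); [contradiction|done]. Qed.

Lemma Rbar_max_fin (a b : R) : Defs.Rbar_max (Finite a) (Finite b) = Finite (Rmax a b).
Proof.
  unfold Defs.Rbar_max. destruct (Rlt_dec a b) as [h|h].
  - rewrite decP_T //. f_equal. unfold Rmax; destruct (Rle_dec a b); lra.
  - rewrite decP_F //. f_equal. unfold Rmax; destruct (Rle_dec a b); lra.
Qed.

Section Basic.
Variable X : Type.
Implicit Types (d : X -> X -> Rbar).

Lemma diam_le d U a :
  (forall x y, U x -> U y -> Rbar_le (d x y) (Finite a)) -> Rbar_le (diam d U) (Finite a).
Proof.
  intro H. unfold diam, Rbar_lub.
  have [_ Hl] := proj2_sig (Rbar_ex_lub (fun r => exists x y, U x /\ U y /\ r = d x y)).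
  apply Hl. intros r [x [y [Ux [Uy Hr]]]]. rewrite Hr. auto.
Qed.

Lemma diam_le_inv d U a x y :
  Rbar_le (diam d U) (Finite a) -> U x -> U y -> Rbar_le (d x y) (Finite a).
Proof.
  intros H Ux Uy. unfold diam, Rbar_lub in H.
  have [Hl _] := proj2_sig (Rbar_ex_lub (fun r => exists x y, U x /\ U y /\ r = d x y)).
  eapply Rbar_le_trans; [apply Hl; exists x, y; auto | exact H].
Qed.

Lemma at_most_comp (m : nat) (F G : (X -> Prop) -> Prop) (phi : (X -> Prop) -> (X -> Prop)) :
  (forall U, F U -> exists W, G W /\ U = phi W) -> at_most m G -> at_most m F.
Proof.
  intros H HG f Hf.
  pose w := fun i => epsilon (inhabits (fun _ : X => False))
                      (fun W => (i <= m)%nat -> G W /\ f i = phi W).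
  have Hw : forall i, (i <= m)%nat -> G (w i) /\ f i = phi (w i).
  { intros i hi. unfold w. apply (epsilon_spec (inhabits (fun _ : X => False))
           (fun W => (i <= m)%nat -> G W /\ f i = phi W)).
    destruct (H (f i) (Hf i hi)) as [W [h1 h2]]. exists W; auto. auto. }
  destruct (HG w (fun i hi => proj1 (Hw i hi))) as [i [j [hij [hj e]]]].
  exists i, j; split; [|split]; auto.
  have hi : (i <= m)%nat by apply: (leq_trans (ltnW hij) hj).
  rewrite (proj2 (Hw i hi)) (proj2 (Hw j hj)) e //.
Qed.

Lemma at_most_empty (m : nat) (F : (X -> Prop) -> Prop) :
  (forall U, ~ F U) -> at_most m F.
Proof. intros H f Hf. exfalso. apply (H (f 0%nat)). apply Hf. done. Qed.

Lemma at_most_single (m : nat) (F : (X -> Prop) -> Prop) (U0 : X -> Prop) :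
  (forall U, F U -> U = U0) -> at_most m.+1 F.
Proof.
  intros H f Hf. exists 0%nat, 1%nat. split; [done|split; [done|]].
  rewrite (H _ (Hf 0%nat _)) // (H _ (Hf 1%nat _)) //.
Qed.

Lemma dimN_ext d d' : (forall n, nagata_witness d n <-> nagata_witness d' n) -> dimN d = dimN d'.
Proof.
  intro H. unfold dimN. apply Rbar_glb_rw. intro r; split; intros [n [h1 h2]]; exists n; split; auto; apply H; auto.
Qed.

End Basic.
Set Implicit Arguments.
Unset Strict Implicit.
Local Open Scope R_scope.

Lemma decP_iff (P : Prop) : Defs.decP P = true <-> P.
Proof. unfold Defs.decP; destruct (excluded_middle_informative P); split; intros; try done; contradiction. Qed.

Lemma INR_le_pow (L : R) (k : nat) : 2 <= L -> INR k <= L ^ k.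
Proof.
  intro hL. induction k as [|k IH]. simpl; lra.
  rewrite S_INR. change (L ^ k.+1) with (L * L ^ k). have h1 : 1 <= L ^ k by apply pow_R1_Rle; lra. nra.
Qed.

Section Transfer.
Variables (X : Type) (d1 d2 : X -> X -> Rbar) (g : X -> R) (K0 K2 : R) (n : nat).
Definition Y2 x := ~ is_inf d2 x.
Definition D2 x y := real (d2 x y).
Hypothesis hK0 : 1 <= K0.
Hypothesis hK2 : 1 <= K2.
Hypothesis h2sym : forall x y, d2 x y = d2 y x.
Hypothesis h2fin : forall x y, Y2 x -> Y2 y -> d2 x y = Finite (D2 x y).
Hypothesis h2nn : forall x y, 0 <= D2 x y.
Hypothesis h2diag : forall x, D2 x x = 0.
Hypothesis h2q : forall x y z, Y2 x -> Y2 y -> Y2 z -> D2 x y <= K2 * Rmax (D2 x z) (D2 z y).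
Hypothesis hg0 : forall x, Y2 x -> 0 <= g x.
Hypothesis hH3 : forall x y, Y2 x -> Y2 y -> 0 < g x -> 0 < g y ->
  ~ is_inf d1 x /\ d1 x y = Finite (D2 x y / (g x * g y)).
Hypothesis hH1 : forall t x y, Y2 x -> Y2 y -> D2 x y <= t -> K0 * t < g x ->
  g x <= K0 * g y /\ g y <= K0 * g x.
Hypothesis hH2 : forall a x y, Y2 x -> Y2 y -> g x <= a -> g y <= a -> D2 x y <= K0 * a.

Lemma D2sym x y : D2 x y = D2 y x.
Proof. unfold D2; rewrite h2sym //. Qed.

Lemma D2tri x y z : Y2 x -> Y2 y -> Y2 z -> D2 x y <= K2 * (D2 x z + D2 z y).
Proof.
  intros hx hy hz. eapply Rle_trans; [apply h2q; eauto|].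
  apply Rmult_le_compat_l; [lra|]. have := h2nn x z; have := h2nn z y.
  unfold Rmax; destruct Rle_dec; lra.
Qed.

Variable c : R.
Hypothesis hc : 0 < c.
Variable Cov : R -> (X -> Prop) -> Prop.
Hypothesis hCov : forall sg, 0 < sg -> cover_of_finite_part d1 (Cov sg) /\
   bounded_cover d1 (c * sg) (Cov sg) /\ s_multiplicity_le d1 sg n.+1 (Cov sg).

Definition Lam := 2 * K0 ^ 3.
Definition dl1 := c * Lam ^ 2.
Definition rho11 := K2 * (dl1 + 1).
Definition S1 := K2 ^ 2 * (rho11 + 1).
Definition a01 := K0 * (1 + dl1).
Definition Dc1 := c * S1 * Lam ^ 2 + K0 * a01.
Definition C1 := K2 ^ 3 * (dl1 + 1 + Dc1).

Lemma Lam_ge : 2 * K0 <= Lam /\ 2 <= Lam /\ K0 ^ 3 < Lam.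
Proof.
  unfold Lam. have h1 : 1 <= K0 ^ 3 by apply pow_R1_Rle.
  have h2 : K0 <= K0 ^ 3 by simpl; nra. lra.
Qed.

Lemma consts_pos : 0 < dl1 /\ 0 < rho11 /\ 0 < S1 /\ 0 < a01 /\ 0 < Dc1 /\ 0 < C1.
Proof.
  have [_ [hL _]] := Lam_ge.
  have hd : 0 < dl1 by unfold dl1; apply Rmult_lt_0_compat; [lra| apply pow_lt; lra].
  have hr : 0 < rho11 by unfold rho11; apply Rmult_lt_0_compat; lra.
  have hS : 0 < S1 by unfold S1; apply Rmult_lt_0_compat; [apply pow_lt; lra| lra].
  have ha : 0 < a01 by unfold a01; apply Rmult_lt_0_compat; lra.
  have hD : 0 < Dc1.
  { unfold Dc1. have : 0 < c * S1 * Lam ^ 2 by apply Rmult_lt_0_compat; [nra| apply pow_lt; lra]. nra. }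
  repeat split; auto. unfold C1; apply Rmult_lt_0_compat; [apply pow_lt; lra| lra].
Qed.

Variable s : R.
Hypothesis hs : 0 < s.

Definition dl := dl1 * s.
Definition rr := s.
Definition rho1 := rho11 * s.
Definition SS := S1 * s.
Definition a0 := a01 * s.
Definition Dc := Dc1 * s.

Lemma rel_consts : rho1 = K2 * (dl + rr) /\ SS = K2 ^ 2 * (rho1 + s) /\ a0 = K0 * (s + dl)
   /\ Dc = c * SS * Lam ^ 2 + K0 * a0 /\ dl = c * s * Lam ^ 2.
Proof. unfold rho1, dl, rr, SS, a0, Dc, Dc1, S1, rho11, a01, dl1. repeat split; ring. Qed.

Lemma pos_s : 0 < dl /\ 0 < rho1 /\ 0 < SS /\ 0 < a0 /\ 0 < Dc.
Proof.
  have := consts_pos. unfold dl, rho1, SS, a0, Dc. intros [h1 [h2 [h3 [h4 [h5 _]]]]].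
  repeat split; apply Rmult_lt_0_compat; auto.
Qed.

Lemma a0_big : K0 * s < a0 /\ K0 * dl < a0 /\ K0 * rr < a0.
Proof.
  have [e1 [e2 [e3 _]]] := rel_consts. have [hd _] := pos_s. rewrite e3; unfold rr. nra.
Qed.

Lemma lev_ex x : exists k, Defs.decP (g x <= a0 * Lam ^ k).
Proof.
  have [_ [_ [_ [ha _]]]] := pos_s. have [_ [hL _]] := Lam_ge.
  have [k hk] : exists k : nat, g x / a0 <= INR k.
  { destruct (Rle_dec (g x / a0) 0) as [h|h]. exists 0%nat; simpl; lra.
    have h0 : 0 <= g x / a0 by lra.
    destruct (nfloor_ex _ h0) as [k hk]. exists (k.+1). rewrite S_INR. lra. }
  exists k. apply/decP_iff. have := INR_le_pow k hL.
  have : g x <= INR k * a0. { apply (Rmult_le_compat_r a0) in hk; [|lra]. field_simplify in hk; lra. }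
  nra.
Qed.

Definition lev x : nat := ex_minn (lev_ex x).

Lemma lev_le x k : (lev x <= k)%nat <-> g x <= a0 * Lam ^ k.
Proof.
  have [_ [_ [_ [ha _]]]] := pos_s. have [_ [hL _]] := Lam_ge.
  unfold lev. case: ex_minnP => m hm hmin. split.
  - intro hk. move/decP_iff: hm => hm. eapply Rle_trans; [exact hm|].
    apply Rmult_le_compat_l; [lra|]. apply Rle_pow; [lra|]. apply/leP. done.
  - intro h. apply hmin. apply/decP_iff. done.
Qed.

Lemma lev_gt x k : (k < lev x)%nat <-> a0 * Lam ^ k < g x.
Proof.
  have H := lev_le x k. rewrite ltnNge. split.
  - move/negP => h. destruct (Rlt_le_dec (a0 * Lam ^ k) (g x)); auto. exfalso; apply h; apply H; done.
  - move=> h1; apply/negP => h2. apply H in h2. lra.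
Qed.


Definition Alev k x := Y2 x /\ lev x = k.
Definition sig k := (if odd k then s else SS) / (a0 * Lam ^ k.-1) ^ 2.
Definition fam k (U : X -> Prop) : Prop :=
  match k with
  | 0 => U = Alev 0
  | _ => exists U0, Cov (sig k) U0 /\ U = (fun x => U0 x /\ Alev k x)
  end.

Lemma pow_ge1 j : 1 <= Lam ^ j.
Proof. have [_ [hL _]] := Lam_ge. apply pow_R1_Rle; lra. Qed.

Lemma sig_pos k : 0 < sig k.
Proof.
  have [_ [_ [hS [ha _]]]] := pos_s. have := pow_ge1 k.-1. intro h.
  unfold sig. apply Rdiv_lt_0_compat. destruct (odd k); lra.
  apply pow_lt. nra.
Qed.

Lemma fam_sub k U x : fam k U -> U x -> Alev k x.
Proof.
  destruct k as [|k]. intros hU0; change (U = Alev 0) in hU0; subst U; auto.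
  intros [U0 [_ ->]] [_ h]; exact h.
Qed.

Lemma lev_bounds x j : lev x = j.+1 -> a0 * Lam ^ j < g x /\ g x <= a0 * Lam ^ j.+1.
Proof.
  intro e. split. apply/lev_gt. rewrite e; done. apply/lev_le. rewrite e; done.
Qed.

Lemma g_pos_lev x j : lev x = j.+1 -> 0 < g x.
Proof.
  intro e. have [h _] := lev_bounds e. have [_ [_ [_ [ha _]]]] := pos_s. have := pow_ge1 j. nra.
Qed.

Lemma lev0 x : lev x = 0%nat -> g x <= a0.
Proof. intro e. have := proj1 (lev_le x 0). rewrite e /=. intro h. have := h isT. lra. Qed.

Lemma fam_cover x : Y2 x -> exists U, fam (lev x) U /\ U x.
Proof.
  intro hx. destruct (lev x) eqn:e.
  - exists (Alev 0). simpl; split; auto. split; auto.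
  - have hg := g_pos_lev e. have [hy _] := hH3 hx hx hg hg.
    have [[_ hcov] _] := hCov (sig_pos n0.+1).
    destruct (hcov x hy) as [U0 [h1 h2]].
    exists (fun y => U0 y /\ Alev n0.+1 y). split. exists U0; split; auto.
    split; auto. split; auto.
Qed.

Lemma fam_mesh k U x y : fam k U -> U x -> U y -> D2 x y <= (if odd k then dl else Dc).
Proof.
  have [hd [_ [hS [ha hD]]]] := pos_s. have [_ [_ [_ [e4 e5]]]] := rel_consts.
  destruct k as [|j].
  - intros hU0. change (U = Alev 0) in hU0; subst U. intros [hx ex] [hy ey]. simpl. have := hH2 hx hy (lev0 ex) (lev0 ey).
    rewrite e4. have : 0 <= c * SS * Lam ^ 2 by have := pow_ge1 2; nra. lra.
  - intros [U0 [hU ->]] [h1x [hx ex]] [h1y [hy ey]].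
    have [_ [hb _]] := hCov (sig_pos j.+1).
    have hd1 := diam_le_inv (hb U0 hU) h1x h1y.
    have [gx1 gx2] := lev_bounds ex. have [gy1 gy2] := lev_bounds ey.
    have gxp := g_pos_lev ex. have gyp := g_pos_lev ey.
    have [_ e] := hH3 hx hy gxp gyp. rewrite e /= in hd1.
    have hL := pow_ge1 j.
    set u := a0 * Lam ^ j.
    have hu : 0 < u by unfold u; nra.
    have hsig : sig j.+1 = (if odd j.+1 then s else SS) / u ^ 2 by done.
    rewrite hsig in hd1.
    set tau := (if odd j.+1 then s else SS) in hd1 *.
    have htau : 0 < tau by unfold tau; destruct (odd j.+1); lra.
    have hgx : g x <= Lam * u by unfold u; change (Lam ^ j.+1) with (Lam * Lam ^ j) in gx2; lra.
    have hgy : g y <= Lam * u by unfold u; change (Lam ^ j.+1) with (Lam * Lam ^ j) in gy2; lra.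
    have hD2 : D2 x y <= c * (tau / u ^ 2) * (g x * g y).
    { have hp : 0 < g x * g y by nra.
      apply (Rmult_le_compat_r (g x * g y)) in hd1; [|lra].
      replace (D2 x y / (g x * g y) * (g x * g y)) with (D2 x y) in hd1 by (field; lra). exact hd1. }
    have hgg : g x * g y <= (Lam * u) ^ 2 by simpl; nra.
    have hc' : 0 <= c * (tau / u ^ 2) by apply Rmult_le_pos; [lra| apply Rlt_le, Rdiv_lt_0_compat; [lra| apply pow_lt; lra]].
    have : D2 x y <= c * tau * Lam ^ 2.
    { eapply Rle_trans; [exact hD2|]. eapply Rle_trans; [apply Rmult_le_compat_l; [exact hc'| exact hgg]|].
      right. field. lra. }
    unfold tau. destruct (odd j.+1); intro h. rewrite e5; lra.
    rewrite e4. have : 0 <= K0 * a0 by nra. lra.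
Qed.

Lemma d1_small k x y tau : (0 < k)%nat -> Alev k x -> Alev k y -> D2 x y <= tau ->
  Rbar_le (d1 x y) (Finite (tau / (a0 * Lam ^ k.-1) ^ 2)).
Proof.
  have [_ [_ [_ [ha _]]]] := pos_s.
  destruct k as [|j]; [done|]. intros _ [hx ex] [hy ey] hD.
  have [gx1 _] := lev_bounds ex. have [gy1 _] := lev_bounds ey.
  have gxp := g_pos_lev ex. have gyp := g_pos_lev ey.
  have [_ e] := hH3 hx hy gxp gyp. rewrite e /=.
  have hL := pow_ge1 j. simpl.
  set u := a0 * Lam ^ j in gx1 gy1 *.
  have hu : 0 < u by unfold u; nra.
  have hnn := h2nn x y.
  have hgg : u * (u * 1) <= g x * g y by nra.
  have hp : 0 < u * (u * 1) by nra.
  apply (Rle_trans _ (D2 x y / (u * (u * 1)))).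
  - unfold Rdiv. apply Rmult_le_compat_l; [lra|]. apply Rinv_le_contravar; lra.
  - unfold Rdiv. apply Rmult_le_compat_r; [apply Rlt_le, Rinv_0_lt_compat; lra| lra].
Qed.

Lemma lev_step x y t : Y2 x -> Y2 y -> D2 x y <= t -> K0 * t <= a0 -> (lev y <= (lev x).+1)%nat.
Proof.
  intros hx hy hD ht. have [_ [_ [_ [ha _]]]] := pos_s. have [hLK [hL _]] := Lam_ge.
  destruct (lev y) as [|j] eqn:ey; [done|].
  have [gy1 _] := lev_bounds ey. have := pow_ge1 j. intro hp.
  have hDs : D2 y x <= t by rewrite D2sym.
  have [h1 _] := hH1 hy hx hDs (ltac:(nra) : K0 * t < g y).
  rewrite -ey; apply/lev_le. have := proj1 (lev_le x (lev x)) (leqnn _). intro hgx.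
  have hp2 := pow_ge1 (lev x). change (Lam ^ (lev x).+1) with (Lam * Lam ^ (lev x)).
  have : K0 * g x <= K0 * (a0 * Lam ^ lev x) by apply Rmult_le_compat_l; lra.
  have : K0 * (a0 * Lam ^ lev x) <= Lam * (a0 * Lam ^ lev x) by apply Rmult_le_compat_r; nra.
  nra.
Qed.

Lemma chain_contra Y k y y' a b j : fam k Y -> odd k -> Y y -> Y y' -> Y2 a -> Y2 b ->
  D2 y a <= rr -> D2 y' b <= rr -> lev a = j -> lev b = j.+2 -> k = j.+1 -> False.
Proof.
  intros hY hk hy hy' ha hb hya hyb ea eb ek.
  have [hd [_ [_ [ha0 _]]]] := pos_s. have [_ [hL hK3]] := Lam_ge.
  have [b1 [b2 b3]] := a0_big.
  have [hYy ey] := fam_sub hY hy. have [hYy' ey'] := fam_sub hY hy'.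
  have hm := fam_mesh hY hy' hy. rewrite hk in hm.
  rewrite ek in ey ey'.
  have [gy1 _] := lev_bounds ey. have [gy1' _] := lev_bounds ey'.
  have [gb1 _] := lev_bounds eb.
  have ga : g a <= a0 * Lam ^ j by apply/lev_le; rewrite ea.
  have p1 := pow_ge1 j. have p2 := pow_ge1 j.+1.
  have hby' : D2 b y' <= rr by rewrite D2sym.
  have [c1 _] := hH1 hb hYy' hby' (ltac:(nra) : K0 * rr < g b).
  have [c2 _] := hH1 hYy' hYy hm (ltac:(nra) : K0 * dl < g y').
  have [c3 _] := hH1 hYy ha hya (ltac:(nra) : K0 * rr < g y).
  have hg0a := hg0 ha.
  have : g b <= K0 ^ 3 * g a.
  { simpl. have : K0 * g y' <= K0 * (K0 * g y) by apply Rmult_le_compat_l; lra.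
    have : K0 * (K0 * g y) <= K0 * (K0 * (K0 * g a)) by repeat apply Rmult_le_compat_l; nra.
    nra. }
  have : K0 ^ 3 * g a <= K0 ^ 3 * (a0 * Lam ^ j) by apply Rmult_le_compat_l; [have := pow_ge1 j; simpl; nra| lra].
  have : K0 ^ 3 * (a0 * Lam ^ j) < Lam * (a0 * Lam ^ j) by apply Rmult_lt_compat_r; nra.
  change (Lam ^ j.+1) with (Lam * Lam ^ j) in gb1. lra.
Qed.

Lemma no_double Y k y1 y2 a1 a2 : fam k Y -> odd k -> Y y1 -> Y y2 -> Y2 a1 -> Y2 a2 ->
  D2 y1 a1 <= rr -> D2 y2 a2 <= rr -> ~~ odd (lev a1) -> ~~ odd (lev a2) -> lev a1 = lev a2.
Proof.
  intros hY hk hy1 hy2 ha1 ha2 h1 h2 o1 o2.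
  have [b1 [b2 b3]] := a0_big.
  have [hY1 e1] := fam_sub hY hy1. have [hY2 e2] := fam_sub hY hy2.
  have s1 := lev_step hY1 ha1 h1 (Rlt_le _ _ b3).
  have s2 := lev_step hY2 ha2 h2 (Rlt_le _ _ b3).
  have s1' := lev_step ha1 hY1 (ltac:(rewrite D2sym; exact h1)) (Rlt_le _ _ b3).
  have s2' := lev_step ha2 hY2 (ltac:(rewrite D2sym; exact h2)) (Rlt_le _ _ b3).
  rewrite e1 in s1 s1'. rewrite e2 in s2 s2'.
  have n1 : lev a1 <> k by intro e; rewrite e hk in o1.
  have n2 : lev a2 <> k by intro e; rewrite e hk in o2.
  destruct k as [|j]; [done|].
  have [E1|E1] : lev a1 = j \/ lev a1 = j.+2 by lia.
  - have [E2|E2] : lev a2 = j \/ lev a2 = j.+2 by lia. lia.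
    exfalso; exact (chain_contra hY hk hy1 hy2 ha1 ha2 h1 h2 E1 E2 erefl).
  - have [E2|E2] : lev a2 = j \/ lev a2 = j.+2 by lia.
    exfalso; exact (chain_contra hY hk hy2 hy1 ha2 ha1 h2 h1 E2 E1 erefl). lia.
Qed.

Definition coarse U := exists k, ~~ odd k /\ fam k U.
Definition fine U := exists k, odd k /\ fam k U.
Definition near (Y : X -> Prop) a := Y2 a /\ exists y, Y y /\ D2 y a <= rr.
Definition isPar Y W := exists a, coarse W /\ W a /\ near Y a.
Definition hasPar Y := exists W, isPar Y W.
Definition par Y := epsilon (inhabits (fun _ : X => False)) (isPar Y).
Definition Mset W := fun x => W x \/ exists Y, fine Y /\ hasPar Y /\ par Y = W /\ Y x.
Definition B2 U := (exists W, coarse W /\ U = Mset W) \/ (exists Y, fine Y /\ ~ hasPar Y /\ U = Y).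

Lemma par_spec Y : hasPar Y -> isPar Y (par Y).
Proof. intros [W h]. unfold par. apply epsilon_spec. exists W; exact h. Qed.

Lemma fam_Y2 k U x : fam k U -> U x -> Y2 x.
Proof. intros h1 h2. exact (proj1 (fam_sub h1 h2)). Qed.

Lemma B2_sub U x : B2 U -> U x -> Y2 x.
Proof.
  intros [[W [[k [_ hW]] ->]] | [Y [[k [_ hY]] [_ ->]]]] hx.
  - destruct hx as [hx | [Y [[k' [_ hY]] [_ [_ hx]]]]]; eapply fam_Y2; eauto.
  - eapply fam_Y2; eauto.
Qed.

Lemma B2_cover x : Y2 x -> exists U, B2 U /\ U x.
Proof.
  intro hx. destruct (fam_cover hx) as [U [hU hUx]].
  destruct (odd (lev x)) eqn:eo.
  - destruct (classic (hasPar U)) as [hp|hp].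
    + have [a [hc' _]] := par_spec hp.
      exists (Mset (par U)). split. left; exists (par U); split; auto.
      right. exists U. repeat split; auto. exists (lev x); auto.
    + exists U. split; auto. right. exists U. repeat split; auto. exists (lev x); auto.
  - exists (Mset U). split. left. exists U; split; auto. exists (lev x); rewrite eo; auto.
    left; auto.
Qed.

Lemma mesh_coarse W x y : coarse W -> W x -> W y -> D2 x y <= Dc.
Proof. intros [k [hk hW]] hx hy. have := fam_mesh hW hx hy. by rewrite (negbTE hk). Qed.

Lemma mesh_fine Y x y : fine Y -> Y x -> Y y -> D2 x y <= dl.
Proof. intros [k [hk hY]] hx hy. have := fam_mesh hY hx hy. by rewrite hk. Qed.

Lemma coarse_Y2 W x : coarse W -> W x -> Y2 x.
Proof. intros [k [_ h]] hx; eapply fam_Y2; eauto. Qed.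
Lemma fine_Y2 W x : fine W -> W x -> Y2 x.
Proof. intros [k [_ h]] hx; eapply fam_Y2; eauto. Qed.

Lemma qmax x y z A B : Y2 x -> Y2 y -> Y2 z -> D2 x z <= A -> D2 z y <= B -> D2 x y <= K2 * Rmax A B.
Proof.
  intros hx hy hz h1 h2. eapply Rle_trans; [apply h2q; eauto|].
  apply Rmult_le_compat_l; [lra|]. unfold Rmax. repeat destruct Rle_dec; lra.
Qed.

Lemma Rmax_le_sum A B : 0 <= A -> 0 <= B -> Rmax A B <= A + B.
Proof. unfold Rmax; destruct Rle_dec; lra. Qed.

Lemma child_dist W Y u w : coarse W -> fine Y -> hasPar Y -> par Y = W -> Y u -> W w ->
  D2 u w <= K2 ^ 2 * (dl + rr + Dc).
Proof.
  intros hW hY hp ep hu hw. have [hd [_ [_ [_ hD]]]] := pos_s.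
  destruct (par_spec hp) as [a [_ [ha [haY [y' [hy' hya]]]]]]. rewrite ep in ha.
  have hu2 := fine_Y2 hY hu. have hy2 := fine_Y2 hY hy'. have hw2 := coarse_Y2 hW hw.
  have h1 : D2 u a <= K2 * Rmax dl rr := qmax hu2 haY hy2 (mesh_fine hY hu hy') hya.
  have h2 := qmax hu2 hw2 haY h1 (mesh_coarse hW ha hw).
  eapply Rle_trans; [exact h2|].
  have e1 := Rmax_le_sum (Rlt_le _ _ hd) (Rlt_le _ _ hs). unfold rr in *.
  have : 0 <= K2 * Rmax dl s by apply Rmult_le_pos; [lra| unfold Rmax; destruct Rle_dec; lra].
  intro hpos.
  have : Rmax (K2 * Rmax dl s) Dc <= K2 * (dl + s + Dc).
  { apply Rmax_lub; nra. }
  intro hm. simpl. nra.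
Qed.

Lemma C1s : C1 * s = K2 ^ 3 * (dl + rr + Dc).
Proof. unfold C1, dl, rr, Dc. ring. Qed.

Lemma Mset_mesh W x y : coarse W -> Mset W x -> Mset W y -> D2 x y <= C1 * s.
Proof.
  intros hW hx hy. rewrite C1s. have [hd [_ [_ [_ hD]]]] := pos_s.
  have hE : 0 <= dl + rr + Dc by unfold rr; lra.
  have k2 : K2 ^ 2 * (dl + rr + Dc) <= K2 ^ 3 * (dl + rr + Dc).
  { apply Rmult_le_compat_r; auto. simpl; nra. }
  have k1 : 1 * (dl + rr + Dc) <= K2 ^ 2 * (dl + rr + Dc).
  { apply Rmult_le_compat_r; auto. simpl; nra. }
  destruct hx as [hx | [Y [hY [hp [ep hx]]]]]; destruct hy as [hy | [Y' [hY' [hp' [ep' hy]]]]].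
  - have := mesh_coarse hW hx hy. unfold rr in *; lra.
  - rewrite D2sym. have := child_dist hW hY' hp' ep' hy hx. lra.
  - have := child_dist hW hY hp ep hx hy. lra.
  - destruct (par_spec hp) as [a [_ [ha [haY [y' [hy' hya]]]]]]. rewrite ep in ha.
    have hx2 := fine_Y2 hY hx. have hy2 := fine_Y2 hY' hy. have hyy := fine_Y2 hY hy'.
    have h1 : D2 x a <= K2 * Rmax dl rr := qmax hx2 haY hyy (mesh_fine hY hx hy') hya.
    have h2 : D2 a y <= K2 ^ 2 * (dl + rr + Dc) by rewrite D2sym; exact (child_dist hW hY' hp' ep' hy ha).
    have h3 := qmax hx2 hy2 haY h1 h2.
    eapply Rle_trans; [exact h3|].
    have : K2 * Rmax dl rr <= K2 ^ 2 * (dl + rr + Dc).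
    { have := Rmax_le_sum (Rlt_le _ _ hd) (ltac:(unfold rr; lra) : 0 <= rr). simpl. nra. }
    intro h4. change (K2 ^ 3) with (K2 * (K2 * (K2 * 1))).
    have : Rmax (K2 * Rmax dl rr) (K2 ^ 2 * (dl + rr + Dc)) <= K2 ^ 2 * (dl + rr + Dc) by apply Rmax_lub; lra.
    simpl. nra.
Qed.

Lemma B2_mesh U x y : B2 U -> U x -> U y -> D2 x y <= C1 * s.
Proof.
  intros [[W [hW ->]] | [Y [hY [_ ->]]]] hx hy. exact (Mset_mesh hW hx hy).
  have := mesh_fine hY hx hy. rewrite C1s. have [hd [_ [_ [_ hD]]]] := pos_s.
  have : dl <= 1 * (dl + rr + Dc) by unfold rr; lra.
  have : 1 * (dl + rr + Dc) <= K2 ^ 3 * (dl + rr + Dc).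
  { apply Rmult_le_compat_r; [unfold rr; lra|]. simpl; nra. }
  lra.
Qed.

Lemma parity_fact m mc p : (lev p = m \/ lev p = m.+1) -> (mc = m \/ mc = m.+1) ->
  ~~ odd mc -> ~~ odd (lev p) -> lev p = mc.
Proof.
  intros [e1|e1] [e2|e2] h1 h2; rewrite e1 e2; auto; exfalso;
  rewrite e1 in h2; rewrite e2 in h1; simpl in *; destruct (odd m); done.
Qed.

Lemma fine_absorbed Y p v0 : fine Y -> Y p -> Y2 v0 -> D2 p v0 <= rr -> ~~ odd (lev v0) ->
  hasPar Y /\ fam (lev v0) (par Y).
Proof.
  intros hY hp hv0 hpv ho.
  destruct (fam_cover hv0) as [W0 [hW0 hW0v]].
  have hP : hasPar Y.
  { exists W0. exists v0. split. exists (lev v0); auto. split; auto. split; auto. exists p; auto. }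
  split; auto.
  destruct (par_spec hP) as [a [[k'' [hk'' hf]] [ha [haY [y' [hy' hya]]]]]].
  have [_ ea] := fam_sub hf ha.
  destruct hY as [k [hk hYk]].
  have e := no_double hYk hk hy' hp haY hv0 hya hpv (ltac:(rewrite ea; exact hk'')) ho.
  rewrite -e ea. exact hf.
Qed.

Section Mult.
Variable V : X -> Prop.
Hypothesis hV : forall x y, V x -> V y -> D2 x y <= s.
Hypothesis hVY : forall x, V x -> Y2 x.

Lemma mult_C1 m mc v0 : V v0 -> lev v0 = mc -> ~~ odd mc -> (mc = m \/ mc = m.+1) ->
  (forall y, V y -> lev y = m \/ lev y = m.+1) ->
  at_most n.+1 (fun U => B2 U /\ exists x, U x /\ V x).
Proof.
  intros hv0 ev0 hmc hmm hlev.
  have [hd [hr1 [_ [_ _]]]] := pos_s. have [e1 [e2 _]] := rel_consts.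
  have CL : forall U, B2 U -> (exists x, U x /\ V x) -> exists W, fam mc W /\ U = Mset W /\
      exists z, W z /\ Alev mc z /\ exists v, V v /\ D2 z v <= rho1.
  { intros U [[W [[k [hk hW]] ->]] | [Y [hY [hnp ->]]]] [x [hx hxV]].
    - destruct hx as [hx | [Y [hY [hp [ep hx]]]]].
      + have [hxY ex] := fam_sub hW hx.
        have ek : k = mc by rewrite -ex; apply (parity_fact (hlev x hxV) hmm hmc); rewrite ex.
        rewrite ek in hW ex. exists W. split; auto. split; auto. exists x. split; auto. split. hnf; split; auto.
        exists x. split; auto. rewrite h2diag; lra.
      + have hxv0 : D2 x v0 <= rr by apply hV.
        have [_ hf] := fine_absorbed hY hx (hVY hv0) hxv0 (ltac:(rewrite ev0; exact hmc)).
        rewrite ep ev0 in hf. exists W. split; auto. split; auto.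
        destruct (par_spec hp) as [a [_ [ha [haY [y' [hy' hya]]]]]]. rewrite ep in ha.
        exists a. split; auto. split. exact (fam_sub hf ha).
        exists x. split; auto.
        have h := qmax haY (fine_Y2 hY hx) (fine_Y2 hY hy') (ltac:(rewrite D2sym; exact hya)) (mesh_fine hY hy' hx).
        rewrite e1. eapply Rle_trans; [exact h|]. apply Rmult_le_compat_l; [lra|].
        unfold rr; unfold Rmax; destruct Rle_dec; lra.
    - exfalso. apply hnp.
      have hxv0 : D2 x v0 <= rr by apply hV.
      exact (proj1 (fine_absorbed hY hx (hVY hv0) hxv0 (ltac:(rewrite ev0; exact hmc)))). }
  destruct mc as [|j].
  - apply (at_most_single (U0 := Mset (Alev 0))). intros U [hB hm'].
    destruct (CL U hB hm') as [W [hW [-> _]]]. change (W = Alev 0) in hW. by rewrite hW.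
  - set Z := fun z => Alev j.+1 z /\ exists v, V v /\ D2 z v <= rho1.
    apply (at_most_comp (G := fun U0 => Cov (sig j.+1) U0 /\ exists z, U0 z /\ Z z)
                        (phi := fun U0 => Mset (fun x => U0 x /\ Alev j.+1 x))).
    + intros U [hB hm']. destruct (CL U hB hm') as [W [[U0 [hU0 ->]] [-> [z [[hz1 hz2] [hz3 hz4]]]]]].
      exists U0. split; auto. split; auto. exists z. split; auto. split; auto.
    + have [_ [_ hmul]] := hCov (sig_pos j.+1). apply hmul.
      apply diam_le. intros z z' [hz [v [hv hzv]]] [hz' [v' [hv' hzv']]].
      have hsig : sig j.+1 = SS / (a0 * Lam ^ (j.+1).-1) ^ 2 by unfold sig; rewrite (negbTE hmc).
      rewrite hsig. apply d1_small; auto.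
      have hvY := hVY hv. have hvY' := hVY hv'.
      have h1 : D2 v z' <= K2 * Rmax s rho1 := qmax hvY hz'.1 hvY' (hV hv hv') (ltac:(rewrite D2sym; exact hzv')).
      have h2 := qmax hz.1 hz'.1 hvY hzv h1.
      eapply Rle_trans; [exact h2|]. rewrite e2.
      have hm1 : Rmax s rho1 <= s + rho1 by apply Rmax_le_sum; lra.
      have hm2 : Rmax rho1 (K2 * Rmax s rho1) <= K2 * (rho1 + s).
      { apply Rmax_lub; nra. }
      simpl. nra.
Qed.

Lemma mult_C2 m : odd m -> (forall y, V y -> lev y = m) ->
  at_most n.+1 (fun U => B2 U /\ exists x, U x /\ V x).
Proof.
  intros hm hall. destruct m as [|j]; [done|].
  set phi := fun U0 => let Y := (fun x => U0 x /\ Alev j.+1 x) in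
     if Defs.decP (hasPar Y) then Mset (par Y) else Y.
  apply (at_most_comp (G := fun U0 => Cov (sig j.+1) U0 /\ exists x, U0 x /\ V x) (phi := phi)).
  - intros U [[[W [[k [hk hW]] ->]] | [Y [hY [hnp ->]]]] [x [hx hxV]]].
    + destruct hx as [hx | [Y [hY [hp [ep hx]]]]].
      * exfalso. have [_ ex] := fam_sub hW hx. rewrite (hall x hxV) in ex. subst k. by rewrite hm in hk.
      * destruct hY as [k' [hk' hYk]]. have [_ ex] := fam_sub hYk hx. rewrite (hall x hxV) in ex. subst k'.
        destruct hYk as [U0 [hU0 eY]]. exists U0. split. split; auto. exists x. split; auto.
        rewrite eY in hx; exact hx.1.
        unfold phi. rewrite -eY decP_T //. by rewrite ep.
    + destruct hY as [k' [hk' hYk]]. have [_ ex] := fam_sub hYk hx. rewrite (hall x hxV) in ex. subst k'.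
      destruct hYk as [U0 [hU0 eY]]. exists U0. split. split; auto. exists x. split; auto.
      rewrite eY in hx; exact hx.1.
      unfold phi. rewrite -eY decP_F //.
  - have [_ [_ hmul]] := hCov (sig_pos j.+1). apply hmul.
    apply diam_le. intros x y hx hy.
    have hsig : sig j.+1 = s / (a0 * Lam ^ (j.+1).-1) ^ 2 by unfold sig; rewrite hm.
    rewrite hsig. apply d1_small; [done| split; [exact (hVY hx)| exact (hall x hx)]| split; [exact (hVY hy)| exact (hall y hy)]| exact (hV hx hy)].
Qed.

End Mult.

Lemma B2_mult V : Rbar_le (diam d2 V) (Finite s) -> at_most n.+1 (fun U => B2 U /\ exists x, U x /\ V x).
Proof.
  intro hdiam. set V' := fun x => V x /\ Y2 x.
  apply (at_most_comp (G := fun U => B2 U /\ exists x, U x /\ V' x) (phi := fun U => U)).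
  { intros U [hB [x [hx hv]]]. exists U. split; auto. split; auto. exists x. split; auto.
    split; auto. exact (B2_sub hB hx). }
  have hV : forall x y, V' x -> V' y -> D2 x y <= s.
  { intros x y [hx hx2] [hy hy2]. have := diam_le_inv hdiam hx hy. rewrite h2fin //. }
  have hVY : forall x, V' x -> Y2 x by intros x [_ h].
  destruct (classic (exists x, V' x)) as [[x0 hx0]|hne].
  2: { apply at_most_empty. intros U [_ [x [_ hx]]]. apply hne; eauto. }
  have hex : exists k, Defs.decP (exists x, V' x /\ lev x = k) by exists (lev x0); apply/decP_iff; eauto.
  have [b1 _] := a0_big.
  case: (ex_minnP hex) => m hm hmin.
  move/decP_iff: hm => [y0 [hy0 ey0]].
  have hlev : forall y, V' y -> lev y = m \/ lev y = m.+1.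
  { intros y hy. have h1 : (m <= lev y)%nat by apply hmin; apply/decP_iff; eauto.
    have h2 := lev_step (hVY y0 hy0) (hVY y hy) (hV y0 y hy0 hy) (Rlt_le _ _ b1). rewrite ey0 in h2. lia. }
  destruct (odd m) eqn:om.
  - destruct (classic (exists v, V' v /\ lev v = m.+1)) as [[v [hv ev]]|hno].
    + apply (mult_C1 hV hVY hv ev (ltac:(simpl; rewrite om; done)) (or_intror erefl) hlev).
    + apply (mult_C2 hV hVY om). intros y hy. destruct (hlev y hy) as [e|e]; auto. exfalso; eauto.
  - apply (mult_C1 hV hVY hy0 ey0 (ltac:(rewrite om; done)) (or_introl erefl) hlev).
Qed.

Lemma B2_props : cover_of_finite_part d2 B2 /\ bounded_cover d2 (C1 * s) B2 /\ s_multiplicity_le d2 s n.+1 B2.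
Proof.
  split; [split|split].
  - intros U hU x hx. exact (B2_sub hU hx).
  - intros x hx. exact (B2_cover hx).
  - intros U hU. apply diam_le. intros x y hx hy.
    rewrite h2fin; [| exact (B2_sub hU hx) | exact (B2_sub hU hy)]. exact (B2_mesh hU hx hy).
  - intros V hV. exact (B2_mult hV).
Qed.

End Transfer.

Lemma transfer (X : Type) (d1 d2 : X -> X -> Rbar) (g : X -> R) (K0 K2 : R) (n : nat)
  (hK0 : 1 <= K0) (hK2 : 1 <= K2)
  (h2sym : forall x y, d2 x y = d2 y x)
  (h2fin : forall x y, Y2 d2 x -> Y2 d2 y -> d2 x y = Finite (D2 d2 x y))
  (h2nn : forall x y, 0 <= D2 d2 x y)
  (h2diag : forall x, D2 d2 x x = 0)
  (h2q : forall x y z, Y2 d2 x -> Y2 d2 y -> Y2 d2 z -> D2 d2 x y <= K2 * Rmax (D2 d2 x z) (D2 d2 z y))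
  (hg0 : forall x, Y2 d2 x -> 0 <= g x)
  (hH3 : forall x y, Y2 d2 x -> Y2 d2 y -> 0 < g x -> 0 < g y ->
     ~ is_inf d1 x /\ d1 x y = Finite (D2 d2 x y / (g x * g y)))
  (hH1 : forall t x y, Y2 d2 x -> Y2 d2 y -> D2 d2 x y <= t -> K0 * t < g x ->
     g x <= K0 * g y /\ g y <= K0 * g x)
  (hH2 : forall a x y, Y2 d2 x -> Y2 d2 y -> g x <= a -> g y <= a -> D2 d2 x y <= K0 * a) :
  nagata_witness d1 n -> nagata_witness d2 n.
Proof.
  intros [c [hc hW]].
  set P := fun sg (B : (X -> Prop) -> Prop) => 0 < sg -> cover_of_finite_part d1 B /\
     bounded_cover d1 (c * sg) B /\ s_multiplicity_le d1 sg n.+1 B.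
  set Cov := fun sg => epsilon (inhabits (fun _ : (X -> Prop) => False)) (P sg).
  have hCov : forall sg, 0 < sg -> cover_of_finite_part d1 (Cov sg) /\
     bounded_cover d1 (c * sg) (Cov sg) /\ s_multiplicity_le d1 sg n.+1 (Cov sg).
  { intros sg hsg. unfold Cov. apply (epsilon_spec (inhabits (fun _ : (X -> Prop) => False)) (P sg)); auto.
    destruct (hW sg hsg) as [B hB]. exists B. intros _. exact hB. }
  exists (C1 K0 K2 c). split. exact (proj2 (proj2 (proj2 (proj2 (proj2 (consts_pos hK0 hK2 hc)))))).
  intros s hs. eexists. exact (B2_props hK0 hK2 h2sym h2fin h2nn h2diag h2q hg0 hH3 hH1 hH2 hc hCov hs).
Qed.


Definition finp (X : Type) (d : X -> X -> Rbar) x := ~ is_inf d x.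

Record QMs (X : Type) (d : X -> X -> Rbar) (K : R) : Prop := {
  qK : 1 <= K;
  qsym : forall x y, d x y = d y x;
  qfin : forall x y, finp d x -> finp d y -> d x y = Finite (real (d x y));
  qnn : forall x y, 0 <= real (d x y);
  qzero : forall x y, finp d x -> finp d y -> real (d x y) = 0 -> x = y;
  qdiag : forall x, d x x = Finite 0;
  qq : forall x y z, finp d x -> finp d y -> finp d z ->
         real (d x y) <= K * Rmax (real (d x z)) (real (d z y));
  quniq : forall x y, is_inf d x -> is_inf d y -> x = y
}.

Lemma exists_other (X : Type) : at_least_three_points X -> forall x y : X, exists z, z <> x /\ z <> y.
Proof.
  intros [a [b [c [h1 [h2 h3]]]]] x y.
  destruct (classic (a = x)) as [ex|ex]; destruct (classic (a = y)) as [ey|ey].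
  - subst. exists b; split; auto.
  - destruct (classic (b = y)) as [eb|eb]. exists c; subst; split; auto. exists b; subst; split; auto.
  - destruct (classic (b = x)) as [eb|eb]. exists c; subst; split; auto. exists b; subst; split; auto.
  - exists a; auto.
Qed.

Lemma Kq_fin (X : Type) (d : X -> X -> Rbar) K x y z (a b e : R) :
  K_quasi_ineq K d -> d x y = Finite a -> d x z = Finite b -> d z y = Finite e -> a <= K * Rmax b e.
Proof.
  intros hq e1 e2 e3. have := hq x y z. rewrite e1 e2 e3 Rbar_max_fin. simpl. auto.
Qed.

Lemma QMs_of_qm (X : Type) (d : X -> X -> Rbar) : at_least_three_points X -> quasi_metric d ->
  exists K, QMs d K.
Proof.
  intros h3 [[hs | he] [K [hK hq]]]; exists K.
  - destruct hs as [hsym [hfin hz]].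
    have nf : forall x, finp d x.
    { intros x hx. destruct (exists_other h3 x x) as [y [hy _]].
      have := hx y hy. have [hf _] := hfin y x. rewrite -hf. done. }
    have fe : forall x y, d x y = Finite (real (d x y)) by intros x y; have [hf _] := hfin x y; rewrite hf.
    constructor; auto.
    + intros x y. have [hf h0] := hfin x y. rewrite -hf in h0. exact h0.
    + intros x y _ _ e. apply hz. rewrite fe e //.
    + intro x. apply hz; auto.
    + intros x y z _ _ _. apply (Kq_fin hq (fe x y) (fe x z) (fe z y)).
    + intros x y hx. exfalso; exact (nf x hx).
  - destruct he as [hsym [hnn [hz [p [[hp1 hp2] hpu]]]]].
    have infp : is_inf d p by intros y hy; apply hp1.
    have finx : forall x, x <> p -> finp d x.
    { intros x hx hi. destruct (exists_other h3 x p) as [y [hyx hyp]].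
      have := hi y hyx. have := hp2 y x hyp hx. intros hf e. rewrite e in hf. done. }
    have fin_ne : forall x, finp d x -> x <> p by intros x hx e; subst; exact (hx infp).
    have fe : forall x y, finp d x -> finp d y -> d x y = Finite (real (d x y)).
    { intros x y hx hy. have := hp2 x y (fin_ne x hx) (fin_ne y hy). unfold is_finite. auto. }
    constructor; auto.
    + intros x y. have := hnn x y. destruct (d x y); simpl; auto; lra.
    + intros x y hx hy e. apply hz. rewrite fe // e //.
    + intro x. apply hz; auto.
    + intros x y z hx hy hz'. apply (Kq_fin hq (fe x y hx hy) (fe x z hx hz') (fe z y hz' hy)).
    + intros x y hx hy. destruct (classic (x = p)) as [ex|ex]; destruct (classic (y = p)) as [ey|ey]; subst; auto.
      * exfalso; exact (finx y ey hy).
      * exfalso; exact (finx x ex hx).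
      * exfalso; exact (finx x ex hx).
Qed.

Definition divR_fin (a b : R) : b <> 0 -> divR a b = Finite (a / b).
Proof. intro h. unfold divR. rewrite decP_F //. Qed.
Lemma divR_zero (a : R) : divR a 0 = p_infty.
Proof. unfold divR. rewrite decP_T //. Qed.

Section Inv.
Variables (X : Type) (d : X -> X -> Rbar) (K : R) (o : X).
Hypothesis hQ : QMs d K.
Hypothesis ho : finp d o.
Hypothesis h3 : at_least_three_points X.

Definition Dd x y := real (d x y).
Definition rho := involution d o.
Definition Rv x y := real (rho x y).

Lemma Dd_sym x y : Dd x y = Dd y x.
Proof. unfold Dd; rewrite (qsym hQ) //. Qed.
Lemma Dd_nn x y : 0 <= Dd x y.
Proof. apply (qnn hQ). Qed.
Lemma Dd_diag x : Dd x x = 0.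
Proof. unfold Dd; rewrite (qdiag hQ) //. Qed.
Lemma Dd_pos x y : finp d x -> finp d y -> x <> y -> 0 < Dd x y.
Proof. intros hx hy hxy. have := Dd_nn x y. have : Dd x y <> 0 by intro e; apply hxy; apply (qzero hQ); auto. lra. Qed.
Lemma Dd_inf x y : is_inf d x -> y <> x -> Dd y x = 0.
Proof. intros hx hy. unfold Dd. rewrite hx //. Qed.
Lemma Dd_q x y z : finp d x -> finp d y -> finp d z -> Dd x y <= K * Rmax (Dd x z) (Dd z y).
Proof. apply (qq hQ). Qed.
Lemma inf_ne_o w : is_inf d w -> w <> o.
Proof. intros hw e; subst; exact (ho hw). Qed.
Lemma inf_uniq x y : is_inf d x -> is_inf d y -> x = y.
Proof. apply (quniq hQ). Qed.
Lemma nx_pos x : finp d x -> x <> o -> 0 < Dd x o.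
Proof. intros hx hxo. apply Dd_pos; auto. Qed.

Lemma rho_diag x : rho x x = Finite 0.
Proof. unfold rho, involution. rewrite decP_T //. Qed.
Lemma rho_infl x y : x <> y -> is_inf d x -> rho x y = divR 1 (Dd o y).
Proof. intros h1 h2. unfold rho, involution. rewrite decP_F // decP_T //. Qed.
Lemma rho_infr x y : x <> y -> finp d x -> is_inf d y -> rho x y = divR 1 (Dd x o).
Proof. intros h1 h2 h3'. unfold rho, involution. rewrite decP_F // decP_F // decP_T //. Qed.
Lemma rho_fin x y : x <> y -> finp d x -> finp d y -> rho x y = divR (Dd x y) (Dd x o * Dd o y).
Proof. intros h1 h2 h3'. unfold rho, involution. rewrite decP_F // decP_F // decP_F //. Qed.

Lemma rho_o x : x <> o -> rho x o = p_infty.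
Proof.
  intro hx. destruct (classic (is_inf d x)) as [hi|hi].
  - rewrite rho_infl // Dd_diag divR_zero //.
  - rewrite rho_fin // Dd_diag Rmult_0_r divR_zero //.
Qed.

Lemma rho_sym x y : rho x y = rho y x.
Proof.
  destruct (classic (x = y)) as [e|e]. subst; auto.
  destruct (classic (is_inf d x)) as [hx|hx]; destruct (classic (is_inf d y)) as [hy|hy].
  - exfalso; apply e; apply inf_uniq; auto.
  - rewrite rho_infl // rho_infr //; [|auto]. rewrite Dd_sym //.
  - rewrite rho_infr // rho_infl //; [|auto]. rewrite Dd_sym //.
  - rewrite !rho_fin //; [|auto]. rewrite Dd_sym (Dd_sym o x) (Dd_sym o y) (Dd_sym y o) Rmult_comm //.
Qed.

Lemma Rv_infl x y : x <> y -> is_inf d x -> y <> o -> rho x y = Finite (/ Dd y o).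
Proof.
  intros h1 h2 h4. have hy : finp d y by intro hy; apply h1; apply inf_uniq.
  rewrite rho_infl // Dd_sym divR_fin. f_equal; field. all: have := nx_pos hy h4; lra.
Qed.
Lemma Rv_infr x y : x <> y -> is_inf d y -> x <> o -> rho x y = Finite (/ Dd x o).
Proof. intros h1 h2 h4. rewrite rho_sym. apply Rv_infl; auto. Qed.
Lemma Rv_finv x y : x <> y -> finp d x -> finp d y -> x <> o -> y <> o ->
  rho x y = Finite (Dd x y / (Dd x o * Dd y o)).
Proof.
  intros h1 h2 h3' h4 h5. rewrite rho_fin // (Dd_sym o y) divR_fin //.
  have := nx_pos h2 h4. have := nx_pos h3' h5. nra.
Qed.

Lemma rho_inf_iff x : is_inf rho x <-> x = o.
Proof.
  split.
  - intro hx. apply NNPP. intro hxo. destruct (exists_other h3 x o) as [y [hyx hyo]].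
    have := hx y hyx.
    destruct (classic (is_inf d y)) as [hy|hy].
    + rewrite Rv_infl //.
    + destruct (classic (is_inf d x)) as [hx'|hx'].
      * rewrite Rv_infr //.
      * rewrite Rv_finv //.
  - intros -> y hy. apply rho_o; auto.
Qed.

Lemma rho_finv x y : x <> o -> y <> o -> rho x y = Finite (Rv x y).
Proof.
  intros hx hy. unfold Rv.
  destruct (classic (x = y)) as [e|e]. subst; rewrite rho_diag //.
  destruct (classic (is_inf d x)) as [hx'|hx'].
  - rewrite Rv_infl //.
  - destruct (classic (is_inf d y)) as [hy'|hy'].
    + rewrite Rv_infr //.
    + rewrite Rv_finv //.
Qed.

End Inv.

Lemma Rmax_cases a b : (Rmax a b = a /\ b <= a) \/ (Rmax a b = b /\ a <= b).
Proof. unfold Rmax; destruct Rle_dec; [right|left]; split; auto; lra. Qed.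

Lemma core_prod K a b c u v w : 1 <= K -> 0 < a -> 0 < b -> 0 < c -> 0 <= u -> 0 <= v -> 0 <= w ->
  u <= K * Rmax v w -> c <= K * Rmax a v -> c <= K * Rmax b w -> u <= K * Rmax a b ->
  u * c <= K * K * Rmax (v * b) (w * a).
Proof.
  intros hK ha hb hc hu hv hw q1 q2 q3 q4.
  have m1 := Rmax_l (v * b) (w * a). have m2 := Rmax_r (v * b) (w * a).
  have hK2 : 0 <= K * K by nra.
  destruct (Rmax_cases a b) as [[e hab]|[e hab]]; rewrite e in q4.
  - destruct (Rmax_cases b w) as [[e' hbw]|[e' hbw]]; rewrite e' in q3.
    + destruct (Rmax_cases v w) as [[e'' hvw]|[e'' hvw]]; rewrite e'' in q1.
      * have : u * c <= (K * v) * (K * b) by apply Rmult_le_compat; lra.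
        have : K * K * (v * b) <= K * K * Rmax (v * b) (w * a) by apply Rmult_le_compat_l; lra. lra.
      * have : u * c <= (K * w) * (K * b) by apply Rmult_le_compat; lra.
        have : (K * w) * (K * b) <= (K * w) * (K * a) by apply Rmult_le_compat_l; nra.
        have : K * K * (w * a) <= K * K * Rmax (v * b) (w * a) by apply Rmult_le_compat_l; lra. lra.
    + have : u * c <= (K * a) * (K * w) by apply Rmult_le_compat; lra.
      have : K * K * (w * a) <= K * K * Rmax (v * b) (w * a) by apply Rmult_le_compat_l; lra. lra.
  - destruct (Rmax_cases a v) as [[e' hav]|[e' hav]]; rewrite e' in q2.
    + destruct (Rmax_cases v w) as [[e'' hvw]|[e'' hvw]]; rewrite e'' in q1.
      * have : u * c <= (K * v) * (K * a) by apply Rmult_le_compat; lra.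
        have : (K * v) * (K * a) <= (K * v) * (K * b) by apply Rmult_le_compat_l; nra.
        have : K * K * (v * b) <= K * K * Rmax (v * b) (w * a) by apply Rmult_le_compat_l; lra. lra.
      * have : u * c <= (K * w) * (K * a) by apply Rmult_le_compat; lra.
        have : K * K * (w * a) <= K * K * Rmax (v * b) (w * a) by apply Rmult_le_compat_l; lra. lra.
    + have : u * c <= (K * b) * (K * v) by apply Rmult_le_compat; lra.
      have : K * K * (v * b) <= K * K * Rmax (v * b) (w * a) by apply Rmult_le_compat_l; lra. lra.
Qed.

Lemma Kmax_step K A B : 1 <= K -> 0 <= A -> 0 <= B -> K * Rmax A B <= K * K * Rmax A B.
Proof. intros. have := Rmax_l A B. intro. apply Rmult_le_compat_r; nra. Qed.
Lemma Kmax_step' K A B : 1 <= K -> 0 <= A -> 0 <= B -> K * Rmax A B <= K * K * Rmax B A.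
Proof. intros. rewrite (Rmax_comm B A). apply Kmax_step; auto. Qed.

Lemma Rmax_div p q r : 0 < r -> Rmax (p / r) (q / r) = Rmax p q / r.
Proof.
  intro hr. unfold Rmax. destruct (Rle_dec (p / r) (q / r)) as [h|h]; destruct (Rle_dec p q) as [h'|h']; auto.
  - exfalso. apply h'. apply (Rmult_le_reg_r (/ r)). apply Rinv_0_lt_compat; lra. exact h.
  - exfalso. apply h. unfold Rdiv. apply Rmult_le_compat_r; [apply Rlt_le, Rinv_0_lt_compat; lra| lra].
Qed.

Lemma core3 K a b c u v w : 1 <= K -> 0 < a -> 0 < b -> 0 < c -> 0 <= u -> 0 <= v -> 0 <= w ->
  u <= K * Rmax v w -> c <= K * Rmax a v -> c <= K * Rmax b w -> u <= K * Rmax a b ->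
  u / (a * b) <= K * K * Rmax (v / (a * c)) (w / (c * b)).
Proof.
  intros hK ha hb hc hu hv hw q1 q2 q3 q4.
  have hp := core_prod hK ha hb hc hu hv hw q1 q2 q3 q4.
  have habc : 0 < a * b * c by apply Rmult_lt_0_compat; [apply Rmult_lt_0_compat|]; lra.
  replace (v / (a * c)) with (v * b / (a * b * c)) by (field; lra).
  replace (w / (c * b)) with (w * a / (a * b * c)) by (field; lra).
  replace (u / (a * b)) with (u * c / (a * b * c)) by (field; lra).
  rewrite Rmax_div //. unfold Rdiv. rewrite -Rmult_assoc.
  apply Rmult_le_compat_r; [apply Rlt_le, Rinv_0_lt_compat; lra| lra].
Qed.

Section InvQ.
Variables (X : Type) (d : X -> X -> Rbar) (K : R) (o : X).
Hypothesis hQ : QMs d K.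
Hypothesis ho : finp d o.
Hypothesis h3 : at_least_three_points X.

Lemma fin_of_ne_inf x y : is_inf d x -> y <> x -> finp d y.
Proof. intros hx hy hy'. apply hy. apply (inf_uniq hQ); auto. Qed.

Lemma Rv_nn x y : 0 <= Rv d o x y.
Proof.
  unfold Rv. destruct (classic (x = o)) as [ex|ex].
  - subst. destruct (classic (y = o)) as [ey|ey]. subst; rewrite rho_diag //=; lra.
    rewrite (rho_sym o hQ) (rho_o hQ ho) //=; lra.
  - destruct (classic (y = o)) as [ey|ey]. subst; rewrite (rho_o hQ ho) //=; lra.
    destruct (classic (x = y)) as [e|e]. subst; rewrite rho_diag //=; lra.
    destruct (classic (is_inf d x)) as [hx|hx].
    + have hy := fin_of_ne_inf hx (not_eq_sym e). rewrite (Rv_infl hQ ho) //=.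
      have := nx_pos hQ ho hy ey. intro; apply Rlt_le, Rinv_0_lt_compat; lra.
    + destruct (classic (is_inf d y)) as [hy|hy].
      * rewrite (Rv_infr hQ ho) //=. have := nx_pos hQ ho hx ex. intro; apply Rlt_le, Rinv_0_lt_compat; lra.
      * rewrite (Rv_finv hQ ho) //=. have := nx_pos hQ ho hx ex. have := nx_pos hQ ho hy ey. have := Dd_pos hQ hx hy e.
        intros; apply Rlt_le, Rdiv_lt_0_compat; nra.
Qed.

Lemma Rv_pos x y : x <> o -> y <> o -> x <> y -> 0 < Rv d o x y.
Proof.
  intros ex ey e. unfold Rv.
  destruct (classic (is_inf d x)) as [hx|hx].
  + have hy := fin_of_ne_inf hx (not_eq_sym e). rewrite (Rv_infl hQ ho) //=.
    have := nx_pos hQ ho hy ey. intro; apply Rinv_0_lt_compat; lra.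
  + destruct (classic (is_inf d y)) as [hy|hy].
    * rewrite (Rv_infr hQ ho) //=. have := nx_pos hQ ho hx ex. intro; apply Rinv_0_lt_compat; lra.
    * rewrite (Rv_finv hQ ho) //=. have := nx_pos hQ ho hx ex. have := nx_pos hQ ho hy ey. have := Dd_pos hQ hx hy e.
      intros; apply Rdiv_lt_0_compat; nra.
Qed.

Lemma finp_rho x : finp (rho d o) x <-> x <> o.
Proof. unfold finp. have := rho_inf_iff hQ ho h3 x. tauto. Qed.

Lemma Rv_q x y z : x <> o -> y <> o -> z <> o ->
  Rv d o x y <= K * K * Rmax (Rv d o x z) (Rv d o z y).
Proof.
  intros hxo hyo hzo. have hK := qK hQ. have hKK : 1 <= K * K by nra.
  have nn := Rv_nn. 
  have Rd : forall u, Rv d o u u = 0 by intro u; unfold Rv; rewrite rho_diag.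
  destruct (classic (x = y)) as [e|e]. { rewrite e Rd. have h1 := nn y z. have h2 := Rmax_l (Rv d o y z) (Rv d o z y). apply Rmult_le_pos; lra. }
  destruct (classic (z = x)) as [ez|ez]. { rewrite ez Rd. have h1 := Rmax_r 0 (Rv d o x y). have h2 := nn x y.
    apply (Rle_trans _ (1 * Rmax 0 (Rv d o x y))); [lra| apply Rmult_le_compat_r; lra]. }
  destruct (classic (z = y)) as [ez'|ez']. { rewrite ez' Rd. have h1 := Rmax_l (Rv d o x y) 0. have h2 := nn x y.
    apply (Rle_trans _ (1 * Rmax (Rv d o x y) 0)); [lra| apply Rmult_le_compat_r; lra]. }
  have qD := Dd_q hQ.
  unfold Rv.
  destruct (classic (is_inf d x)) as [hx|hx].
  - have hy := fin_of_ne_inf hx (not_eq_sym e). have hz := fin_of_ne_inf hx ez.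
    rewrite (Rv_infl hQ ho e hx hyo) (Rv_infl hQ ho (not_eq_sym ez) hx hzo) (Rv_finv hQ ho ez' hz hy hzo hyo) /=.
    have b := nx_pos hQ ho hy hyo. have c := nx_pos hQ ho hz hzo. have w := Dd_nn hQ z y.
    have q : Dd d z o <= K * Rmax (Dd d y o) (Dd d z y).
    { eapply Rle_trans; [apply (qD z o y); auto|]. rewrite Rmax_comm; lra. }
    replace (/ Dd d y o) with (Dd d z o / (Dd d y o * Dd d z o)) by (field; lra).
    replace (/ Dd d z o) with (Dd d y o / (Dd d z o * Dd d y o)) by (field; lra).
    rewrite (Rmult_comm (Dd d z o) (Dd d y o)) Rmax_div; [|nra].
    unfold Rdiv. rewrite -Rmult_assoc. apply Rmult_le_compat_r; [apply Rlt_le, Rinv_0_lt_compat; nra|].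
    apply (Rle_trans _ _ _ q). have hM : 0 <= Rmax (Dd d y o) (Dd d z y) by (have := Rmax_l (Dd d y o) (Dd d z y); lra).
    first [apply Kmax_step | apply Kmax_step']; try apply (Dd_nn hQ); lra.
  - destruct (classic (is_inf d y)) as [hy|hy].
    + have hz := fin_of_ne_inf hy ez'.
      rewrite (Rv_infr hQ ho e hy hxo) (Rv_finv hQ ho (not_eq_sym ez) hx hz hxo hzo) (Rv_infr hQ ho ez' hy hzo) /=.
      have a := nx_pos hQ ho hx hxo. have c := nx_pos hQ ho hz hzo. have v := Dd_nn hQ x z.
      have q : Dd d z o <= K * Rmax (Dd d x o) (Dd d x z).
      { eapply Rle_trans; [apply (qD z o x); auto|]. rewrite (Dd_sym hQ z x) Rmax_comm; lra. }
      replace (/ Dd d x o) with (Dd d z o / (Dd d x o * Dd d z o)) by (field; lra).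
      replace (/ Dd d z o) with (Dd d x o / (Dd d x o * Dd d z o)) by (field; lra).
      rewrite Rmax_div; [|nra].
      unfold Rdiv. rewrite -Rmult_assoc. apply Rmult_le_compat_r; [apply Rlt_le, Rinv_0_lt_compat; nra|].
      apply (Rle_trans _ _ _ q). have hM : 0 <= Rmax (Dd d x o) (Dd d x z) by (have := Rmax_l (Dd d x o) (Dd d x z); lra).
      first [apply Kmax_step | apply Kmax_step']; try apply (Dd_nn hQ); lra.
    + destruct (classic (is_inf d z)) as [hz|hz].
      * rewrite (Rv_finv hQ ho e hx hy hxo hyo) (Rv_infr hQ ho (not_eq_sym ez) hz hxo) (Rv_infl hQ ho ez' hz hyo) /=.
        have a := nx_pos hQ ho hx hxo. have b := nx_pos hQ ho hy hyo. have u := Dd_nn hQ x y.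
        have q : Dd d x y <= K * Rmax (Dd d x o) (Dd d y o).
        { eapply Rle_trans; [apply (qD x y o); auto|]. rewrite (Dd_sym hQ o y). lra. }
        replace (/ Dd d x o) with (Dd d y o / (Dd d x o * Dd d y o)) by (field; lra).
        replace (/ Dd d y o) with (Dd d x o / (Dd d x o * Dd d y o)) by (field; lra).
        rewrite Rmax_div; [|nra].
        unfold Rdiv. rewrite -Rmult_assoc. apply Rmult_le_compat_r; [apply Rlt_le, Rinv_0_lt_compat; nra|].
        apply (Rle_trans _ _ _ q). have hM : 0 <= Rmax (Dd d x o) (Dd d y o) by (have := Rmax_l (Dd d x o) (Dd d y o); lra).
        first [apply Kmax_step | apply Kmax_step']; try apply (Dd_nn hQ); lra.
      * rewrite (Rv_finv hQ ho e hx hy hxo hyo) (Rv_finv hQ ho (not_eq_sym ez) hx hz hxo hzo) (Rv_finv hQ ho ez' hz hy hzo hyo) /=.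
        have a := nx_pos hQ ho hx hxo. have b := nx_pos hQ ho hy hyo. have c := nx_pos hQ ho hz hzo.
        apply core3; auto; try apply (Dd_nn hQ).
        -- eapply Rle_trans; [apply (qD z o x); auto|]. rewrite (Dd_sym hQ z x) Rmax_comm; lra.
        -- eapply Rle_trans; [apply (qD z o y); auto|]. rewrite Rmax_comm; lra.
        -- eapply Rle_trans; [apply (qD x y o); auto|]. rewrite (Dd_sym hQ o y). lra.
Qed.

Lemma QMs_rho : QMs (rho d o) (K * K).
Proof.
  have hK := qK hQ.
  constructor.
  - nra.
  - apply (rho_sym o hQ).
  - intros x y hx hy. apply finp_rho in hx. apply finp_rho in hy. apply (rho_finv hQ ho); auto.
  - apply Rv_nn.
  - intros x y hx hy e. apply finp_rho in hx. apply finp_rho in hy.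
    apply NNPP; intro ne. have := Rv_pos hx hy ne. unfold Rv in *. lra.
  - intro x. apply rho_diag.
  - intros x y z hx hy hz. apply finp_rho in hx. apply finp_rho in hy. apply finp_rho in hz. apply Rv_q; auto.
  - intros x y hx hy. apply (rho_inf_iff hQ ho h3) in hx. apply (rho_inf_iff hQ ho h3) in hy. congruence.
Qed.

End InvQ.

Lemma transferQ (X : Type) (d1 d2 : X -> X -> Rbar) (g : X -> R) (K0 K2 : R) (n : nat)
  (hK0 : 1 <= K0) (hQ2 : QMs d2 K2)
  (hg0 : forall x, Y2 d2 x -> 0 <= g x)
  (hH3 : forall x y, Y2 d2 x -> Y2 d2 y -> 0 < g x -> 0 < g y ->
     ~ is_inf d1 x /\ d1 x y = Finite (D2 d2 x y / (g x * g y)))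
  (hH1 : forall t x y, Y2 d2 x -> Y2 d2 y -> D2 d2 x y <= t -> K0 * t < g x ->
     g x <= K0 * g y /\ g y <= K0 * g x)
  (hH2 : forall a x y, Y2 d2 x -> Y2 d2 y -> g x <= a -> g y <= a -> D2 d2 x y <= K0 * a) :
  nagata_witness d1 n -> nagata_witness d2 n.
Proof.
  apply (transfer (g := g) (K2 := K2) hK0 (qK hQ2) (qsym hQ2)); auto.
  - intros x y hx hy. exact (qfin hQ2 hx hy).
  - intros x y. apply (qnn hQ2).
  - intros x. unfold D2. rewrite (qdiag hQ2) //.
  - intros x y z hx hy hz. exact (qq hQ2 hx hy hz).
Qed.

Lemma inv_nn a : 0 <= a -> 0 <= / a.
Proof. intro h. destruct (Req_dec a 0) as [e|e]. rewrite e Rinv_0; lra. apply Rlt_le, Rinv_0_lt_compat; lra. Qed.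

Lemma inv_le_K a b K : 0 < a -> 0 < b -> b <= K * a -> / a <= K * / b.
Proof.
  intros ha hb h. replace (/ a) with (b / (a * b)) by (field; lra).
  replace (K * / b) with (K * a / (a * b)) by (field; lra).
  unfold Rdiv. apply Rmult_le_compat_r; [apply Rlt_le, Rinv_0_lt_compat; nra| lra].
Qed.

Section Part2.
Variables (X : Type) (d : X -> X -> Rbar) (K : R) (o : X).
Hypothesis hQ : QMs d K.
Hypothesis ho : finp d o.
Hypothesis h3 : at_least_three_points X.

Lemma Y2_rho x : Y2 (rho d o) x <-> x <> o.
Proof. exact (finp_rho hQ ho h3 x). Qed.

Lemma part2_A n : nagata_witness d n -> nagata_witness (rho d o) n.
Proof.
  have hK := qK hQ.
  have qD := Dd_q hQ.
  apply (transferQ (g := fun x => / Dd d x o) (K0 := K) (K2 := K * K)); auto.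
  - exact (QMs_rho hQ ho h3).
  - intros x _. apply inv_nn, (Dd_nn hQ).
  - intros x y hx hy gx gy. apply Y2_rho in hx. apply Y2_rho in hy.
    have fx : finp d x. { intro hi. rewrite (Dd_sym hQ x o) (Dd_inf hi (not_eq_sym hx)) Rinv_0 in gx. lra. }
    have fy : finp d y. { intro hi. rewrite (Dd_sym hQ y o) (Dd_inf hi (not_eq_sym hy)) Rinv_0 in gy. lra. }
    split; auto.
    have a := nx_pos hQ ho fx hx. have b := nx_pos hQ ho fy hy.
    unfold D2. destruct (classic (x = y)) as [e|e].
    + subst. rewrite rho_diag (qdiag hQ) /=. f_equal. unfold Rdiv; ring.
    + rewrite (Rv_finv hQ ho e fx fy hx hy) /= (qfin hQ fx fy). f_equal. fold (Dd d x y). field. lra.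
  - intros t x y hx hy ht hgx. apply Y2_rho in hx. apply Y2_rho in hy.
    have hnn := Rv_nn hQ ho x y. unfold D2 in ht. fold (Rv d o x y) in ht.
    have fx : finp d x. { intro hi. rewrite (Dd_sym hQ x o) (Dd_inf hi (not_eq_sym hx)) Rinv_0 in hgx. nra. }
    have a := nx_pos hQ ho fx hx.
    destruct (classic (x = y)) as [e|e]. { subst. have := Rinv_0_lt_compat _ a. intro. split; nra. }
    destruct (classic (is_inf d y)) as [hi|hi].
    { exfalso. unfold Rv in ht. rewrite (Rv_infr hQ ho e hi hx) /= in ht. have := Rinv_0_lt_compat _ a. nra. }
    have b := nx_pos hQ ho hi hy. have u := Dd_pos hQ fx hi e.
    unfold Rv in ht. rewrite (Rv_finv hQ ho e fx hi hx hy) /= in ht.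
    have hKu : K * Dd d x y < Dd d y o.
    { have h1 : K * (Dd d x y / (Dd d x o * Dd d y o)) < / Dd d x o by nra.
      replace (K * (Dd d x y / (Dd d x o * Dd d y o))) with (K * Dd d x y / Dd d y o * / Dd d x o) in h1 by (field; lra).
      have h2 : K * Dd d x y / Dd d y o < 1.
      { apply (Rmult_lt_reg_r (/ Dd d x o)); [apply Rinv_0_lt_compat; lra| lra]. }
      apply (Rmult_lt_reg_r (/ Dd d y o)); [apply Rinv_0_lt_compat; lra|].
      replace (Dd d y o * / Dd d y o) with 1 by (field; lra). exact h2. }
    have q1 := qD x o y fx ho hi. have q2 := qD y o x hi ho fx.
    rewrite (Dd_sym hQ y x) in q2.
    have ub : Dd d x y < Dd d y o by nra.
    split.
    + apply inv_le_K; auto.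
      destruct (Rmax_cases (Dd d x y) (Dd d x o)) as [[e1 _]|[e1 _]]; rewrite e1 in q2; nra.
    + apply inv_le_K; auto.
      destruct (Rmax_cases (Dd d x y) (Dd d y o)) as [[e1 h1]|[e1 h1]]; rewrite e1 in q1; lra.
  - intros a' x y hx hy hgx hgy. apply Y2_rho in hx. apply Y2_rho in hy.
    unfold D2. fold (Rv d o x y).
    have ga : 0 <= a' by have := inv_nn (Dd_nn hQ x o); lra.
    destruct (classic (x = y)) as [e|e]. { subst. unfold Rv; rewrite rho_diag /=. nra. }
    destruct (classic (is_inf d x)) as [hi|hi].
    { unfold Rv. rewrite (Rv_infl hQ ho e hi hy) /=. nra. }
    destruct (classic (is_inf d y)) as [hj|hj].
    { unfold Rv. rewrite (Rv_infr hQ ho e hj hx) /=. nra. }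
    unfold Rv. rewrite (Rv_finv hQ ho e hi hj hx hy) /=.
    have a := nx_pos hQ ho hi hx. have b := nx_pos hQ ho hj hy.
    have q := qD x y o hi hj ho. rewrite (Dd_sym hQ o y) in q.
    destruct (Rmax_cases (Dd d x o) (Dd d y o)) as [[e1 h1]|[e1 h1]]; rewrite e1 in q.
    + apply (Rle_trans _ (K * Dd d x o / (Dd d x o * Dd d y o))).
      { unfold Rdiv. apply Rmult_le_compat_r; [apply Rlt_le, Rinv_0_lt_compat; nra| lra]. }
      replace (K * Dd d x o / (Dd d x o * Dd d y o)) with (K * / Dd d y o) by (field; lra).
      apply Rmult_le_compat_l; lra.
    + apply (Rle_trans _ (K * Dd d y o / (Dd d x o * Dd d y o))).
      { unfold Rdiv. apply Rmult_le_compat_r; [apply Rlt_le, Rinv_0_lt_compat; nra| lra]. }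
      replace (K * Dd d y o / (Dd d x o * Dd d y o)) with (K * / Dd d x o) by (field; lra).
      apply Rmult_le_compat_l; lra.
Qed.

Lemma part2_B n : nagata_witness (rho d o) n -> nagata_witness d n.
Proof.
  have hK := qK hQ.
  have qD := Dd_q hQ.
  apply (transferQ (g := fun x => Dd d x o) (K0 := K) (K2 := K)); auto.
  - intros x _. apply (Dd_nn hQ).
  - intros x y hx hy gx gy.
    have hxo : x <> o by intro e; subst; rewrite (Dd_diag hQ) in gx; lra.
    have hyo : y <> o by intro e; subst; rewrite (Dd_diag hQ) in gy; lra.
    split. intro hi. apply (rho_inf_iff hQ ho h3) in hi. auto.
    unfold D2. destruct (classic (x = y)) as [e|e].
    + subst. rewrite rho_diag (qdiag hQ) /=. f_equal. field. lra.
    + rewrite (Rv_finv hQ ho e hx hy hxo hyo). done.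
  - intros t x y hx hy ht hgx. unfold D2 in ht. fold (Dd d x y) in ht.
    have hnn := Dd_nn hQ x y.
    have q1 := qD x o y hx ho hy. have q2 := qD y o x hy ho hx.
    rewrite (Dd_sym hQ y x) in q2.
    have hKt : K * Dd d x y <= K * t by apply Rmult_le_compat_l; lra.
    have ha0 := Dd_nn hQ x o. have hb0 := Dd_nn hQ y o.
    have hKa : Dd d x o <= K * Dd d x o by nra.
    have hKb : Dd d y o <= K * Dd d y o by nra.
    split.
    + destruct (Rmax_cases (Dd d x y) (Dd d y o)) as [[e1 _]|[e1 _]]; rewrite e1 in q1; lra.
    + destruct (Rmax_cases (Dd d x y) (Dd d x o)) as [[e1 _]|[e1 _]]; rewrite e1 in q2; lra.
  - intros a' x y hx hy hgx hgy. unfold D2. fold (Dd d x y).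
    have q := qD x y o hx hy ho. rewrite (Dd_sym hQ o y) in q.
    destruct (Rmax_cases (Dd d x o) (Dd d y o)) as [[e1 _]|[e1 _]]; rewrite e1 in q; nra.
Qed.

Lemma part2 n : nagata_witness d n <-> nagata_witness (involution d o) n.
Proof. split; [apply part2_A| apply part2_B]. Qed.

End Part2.

Lemma Rbar_mult_pinf lam : 0 < lam -> Rbar_mult (Finite lam) p_infty = p_infty.
Proof. intro h. simpl. destruct (Rle_dec 0 lam); [|lra]. destruct (Rle_lt_or_eq_dec 0 lam r); auto; lra. Qed.
Lemma Rbar_mult_minf lam : 0 < lam -> Rbar_mult (Finite lam) m_infty = m_infty.
Proof. intro h. simpl. destruct (Rle_dec 0 lam); [|lra]. destruct (Rle_lt_or_eq_dec 0 lam r); auto; lra. Qed.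

Lemma scale_le lam v a : 0 < lam -> Rbar_le v (Finite a) -> Rbar_le (Rbar_mult (Finite lam) v) (Finite (lam * a)).
Proof.
  intros h hv. destruct v as [r| |]; simpl in hv.
  - simpl. apply Rmult_le_compat_l; lra.
  - done.
  - rewrite Rbar_mult_minf //.
Qed.

Lemma scale_pinf lam v : 0 < lam -> (Rbar_mult (Finite lam) v = p_infty <-> v = p_infty).
Proof.
  intro h. destruct v as [r| |].
  - split; intro e; discriminate e.
  - split; intro e; auto. rewrite Rbar_mult_pinf //.
  - split; intro e. rewrite Rbar_mult_minf // in e. discriminate e.
Qed.

Lemma scale_inv lam v : 0 < lam -> Rbar_mult (Finite (/ lam)) (Rbar_mult (Finite lam) v) = v.
Proof.
  intro h. have hi : 0 < / lam by apply Rinv_0_lt_compat.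
  destruct v as [r| |].
  - simpl. f_equal. field. lra.
  - rewrite !Rbar_mult_pinf //.
  - rewrite !Rbar_mult_minf //.
Qed.

Lemma witness_scale (X : Type) (d d' : X -> X -> Rbar) lam n : 0 < lam ->
  (forall x y, d' x y = Rbar_mult (Finite lam) (d x y)) -> nagata_witness d n -> nagata_witness d' n.
Proof.
  intros hl hd [c [hc hW]].
  have hinf : forall x, is_inf d' x <-> is_inf d x.
  { intro x; split; intros h y hy; have := h y hy; rewrite hd; [rewrite scale_pinf //| intro e; rewrite e Rbar_mult_pinf //]. }
  exists c. split; auto. intros s hs.
  have hs' : 0 < s / lam by apply Rdiv_lt_0_compat.
  destruct (hW _ hs') as [B [[hB1 hB2] [hB3 hB4]]].
  exists B. split; [split|split].
  - intros U hU x hx hi. apply (hB1 U hU x hx). apply hinf; auto.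
  - intros x hx. apply hB2. intro hi; apply hx; apply hinf; auto.
  - intros U hU. apply diam_le. intros x y hx hy. rewrite hd.
    replace (c * s) with (lam * (c * (s / lam))) by (field; lra).
    apply scale_le; auto. exact (diam_le_inv (hB3 U hU) hx hy).
  - intros V hV. apply hB4. apply diam_le. intros x y hx hy.
    have h1 := diam_le_inv hV hx hy. rewrite hd in h1.
    have h2 := scale_le (Rinv_0_lt_compat _ hl) h1. rewrite scale_inv // in h2.
    replace (s / lam) with (/ lam * s) by (unfold Rdiv; ring). exact h2.
Qed.

Lemma dimN_rescale (X : Type) (d : X -> X -> Rbar) lam : 0 < lam -> dimN d = dimN (rescale lam d).
Proof.
  intro hl. apply dimN_ext. intro n. split.
  - apply witness_scale with lam; auto.
  - apply witness_scale with (/ lam). apply Rinv_0_lt_compat; auto.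
    intros x y. unfold rescale. rewrite scale_inv //.
Qed.

Lemma at_most_comp2 (X Y : Type) (m : nat) (F : (X -> Prop) -> Prop) (G : (Y -> Prop) -> Prop)
  (phi : (Y -> Prop) -> (X -> Prop)) :
  (forall U, F U -> exists W, G W /\ U = phi W) -> at_most m G -> at_most m F.
Proof.
  intros H HG f Hf.
  pose w := fun i => epsilon (inhabits (fun _ : Y => False))
                      (fun W => (i <= m)%nat -> G W /\ f i = phi W).
  have Hw : forall i, (i <= m)%nat -> G (w i) /\ f i = phi (w i).
  { intros i hi. unfold w. apply (epsilon_spec (inhabits (fun _ : Y => False))
           (fun W => (i <= m)%nat -> G W /\ f i = phi W)).
    destruct (H (f i) (Hf i hi)) as [W [h1 h2]]. exists W; auto. auto. }
  destruct (HG w (fun i hi => proj1 (Hw i hi))) as [i [j [hij [hj e]]]].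
  exists i, j; split; [|split]; auto.
  have hi : (i <= m)%nat by apply: (leq_trans (ltnW hij) hj).
  rewrite (proj2 (Hw i hi)) (proj2 (Hw j hj)) e //.
Qed.

Lemma witness_transport (A B : Type) (f : A -> B) (g : B -> A) (dA : A -> A -> Rbar) (dB : B -> B -> Rbar) n :
  cancel f g -> cancel g f -> (forall x y, dA x y = dB (f x) (f y)) ->
  nagata_witness dB n -> nagata_witness dA n.
Proof.
  intros fg gf hd [c [hc hW]].
  have hinf : forall x, is_inf dA x <-> is_inf dB (f x).
  { intro x; split; intros h y hy.
    - rewrite -(gf y) -hd. apply h. intro e; apply hy; rewrite -e gf //.
    - rewrite hd. apply h. intro e; apply hy. rewrite -(fg y) e fg //. }
  exists c. split; auto. intros s hs.
  destruct (hW _ hs) as [BB [[hB1 hB2] [hB3 hB4]]].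
  exists (fun U => exists U', BB U' /\ U = (fun x => U' (f x))). split; [split|split].
  - intros U [U' [hU' ->]] x hx hi. apply (hB1 U' hU' (f x) hx). apply hinf; auto.
  - intros x hx. destruct (hB2 (f x)) as [U' [hU' hx']]. intro hi; apply hx; apply hinf; auto.
    exists (fun x => U' (f x)). split; auto. exists U'; auto.
  - intros U [U' [hU' ->]]. apply diam_le. intros x y hx hy. rewrite hd. exact (diam_le_inv (hB3 U' hU') hx hy).
  - intros V hV.
    apply (at_most_comp2 (G := fun U' => BB U' /\ exists x, U' x /\ (fun b => V (g b)) x) (phi := fun U' => fun x => U' (f x))).
    + intros U [[U' [hU' ->]] [x [hx hv]]]. exists U'. split; auto. split; auto. exists (f x). split; auto. rewrite fg //.
    + apply hB4. apply diam_le. intros x y hx hy. have := diam_le_inv hV hx hy. rewrite hd !gf //.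
Qed.

Lemma mkq0 (X : Type) (a b c e : X) : mkquad a b c e (inord O) = a.
Proof. rewrite /mkquad. have -> : val (inord O : 'I_4) = O by apply: inordK. done. Qed.
Lemma mkq1 (X : Type) (a b c e : X) : mkquad a b c e (inord (S O)) = b.
Proof. rewrite /mkquad. have -> : val (inord (S O) : 'I_4) = (S O) by apply: inordK. done. Qed.
Lemma mkq2 (X : Type) (a b c e : X) : mkquad a b c e (inord (S (S O))) = c.
Proof. rewrite /mkquad. have -> : val (inord (S (S O)) : 'I_4) = (S (S O)) by apply: inordK. done. Qed.
Lemma mkq3 (X : Type) (a b c e : X) : mkquad a b c e (inord (S (S (S O)))) = e.
Proof. rewrite /mkquad. have -> : val (inord (S (S (S O))) : 'I_4) = (S (S (S O))) by apply: inordK. done. Qed.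

Section Crt.
Variables (X : Type) (d : X -> X -> Rbar) (K : R) (o : X).
Hypothesis hQ : QMs d K.
Hypothesis ho : finp d o.

Lemma ip_FF u v : u <> v -> finp d u -> finp d v -> infpair d u v = false.
Proof. intros h1 h2 h3. unfold infpair. apply decP_F. intros [_ [h|h]]; auto. Qed.
Lemma ip_T1 u v : u <> v -> is_inf d u -> infpair d u v = true.
Proof. intros h1 h2. unfold infpair. apply decP_T. auto. Qed.
Lemma ip_T2 u v : u <> v -> is_inf d v -> infpair d u v = true.
Proof. intros h1 h2. unfold infpair. apply decP_T. auto. Qed.

Lemma Rv_eq x y : x <> y -> x <> o -> y <> o -> finp d x -> finp d y ->
  Rv d o x y = Dd d x y / (Dd d x o * Dd d y o).
Proof. intros. unfold Rv. rewrite (Rv_finv hQ ho) //. Qed.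
Lemma Rv_eql x y : x <> y -> y <> o -> is_inf d x -> Rv d o x y = / Dd d y o.
Proof. intros. unfold Rv. rewrite (Rv_infl hQ ho) //. Qed.
Lemma Rv_eqr x y : x <> y -> x <> o -> is_inf d y -> Rv d o x y = / Dd d x o.
Proof. intros. unfold Rv. rewrite (Rv_infr hQ ho) //. Qed.

Lemma crt_rho x y z : x <> y -> y <> z -> x <> z -> x <> o -> y <> o -> z <> o ->
  exists mu, 0 < mu /\ crt_d d (mkquad o x y z) = (mu * Rv d o y z, mu * Rv d o z x, mu * Rv d o x y).
Proof.
  intros hxy hyz hxz hxo hyo hzo.
  have fi := fin_of_ne_inf hQ.
  rewrite /crt_d mkq0 mkq1 mkq2 mkq3 /crt_prod /ninf /fpart.
  have ds := Dd_sym hQ.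
  destruct (classic (is_inf d x)) as [hx|hx].
  - have fy := fi _ _ hx (not_eq_sym hxy). have fz := fi _ _ hx (not_eq_sym hxz).
    rewrite (ip_T2 (not_eq_sym hxo) hx) (ip_FF hyz fy fz) (ip_FF (not_eq_sym hyo) ho fy)
            (ip_T2 (not_eq_sym hxz) hx) (ip_FF (not_eq_sym hzo) ho fz) (ip_T1 hxy hx) /=.
    have b := nx_pos hQ ho fy hyo. have c := nx_pos hQ ho fz hzo.
    exists (Dd d y o * Dd d z o). split; [nra|].
    rewrite (Rv_eq hyz hyo hzo fy fz) (Rv_eqr (not_eq_sym hxz) hzo hx) (Rv_eql hxy hyo hx).
    unfold Dd in *. rewrite (qsym hQ o y) (qsym hQ o z). f_equal; [f_equal|]; field; lra.
  - destruct (classic (is_inf d y)) as [hy|hy].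
    + have fz := fi _ _ hy (not_eq_sym hyz).
      rewrite (ip_FF (not_eq_sym hxo) ho hx) (ip_T1 hyz hy) (ip_T2 (not_eq_sym hyo) hy)
              (ip_FF (not_eq_sym hxz) fz hx) (ip_FF (not_eq_sym hzo) ho fz) (ip_T2 hxy hy) /=.
      have a := nx_pos hQ ho hx hxo. have c := nx_pos hQ ho fz hzo.
      exists (Dd d x o * Dd d z o). split; [nra|].
      rewrite (Rv_eql hyz hzo hy) (Rv_eq (not_eq_sym hxz) hzo hxo fz hx) (Rv_eqr hxy hxo hy).
      unfold Dd in *. rewrite (qsym hQ o x) (qsym hQ o z) (qsym hQ z x). f_equal; [f_equal|]; field; lra.
    + destruct (classic (is_inf d z)) as [hz|hz].
      * rewrite (ip_FF (not_eq_sym hxo) ho hx) (ip_T2 hyz hz) (ip_FF (not_eq_sym hyo) ho hy)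
                (ip_T1 (not_eq_sym hxz) hz) (ip_T2 (not_eq_sym hzo) hz) (ip_FF hxy hx hy) /=.
        have a := nx_pos hQ ho hx hxo. have b := nx_pos hQ ho hy hyo.
        exists (Dd d x o * Dd d y o). split; [nra|].
        rewrite (Rv_eqr hyz hyo hz) (Rv_eql (not_eq_sym hxz) hxo hz) (Rv_eq hxy hxo hyo hx hy).
        unfold Dd in *. rewrite (qsym hQ o x) (qsym hQ o y). f_equal; [f_equal|]; field; lra.
      * rewrite (ip_FF (not_eq_sym hxo) ho hx) (ip_FF hyz hy hz) (ip_FF (not_eq_sym hyo) ho hy)
                (ip_FF (not_eq_sym hxz) hz hx) (ip_FF (not_eq_sym hzo) ho hz) (ip_FF hxy hx hy) /=.
        have a := nx_pos hQ ho hx hxo. have b := nx_pos hQ ho hy hyo. have c := nx_pos hQ ho hz hzo.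
        exists (Dd d x o * Dd d y o * Dd d z o). split; [apply Rmult_lt_0_compat; [apply Rmult_lt_0_compat|]; lra|].
        rewrite (Rv_eq hyz hyo hzo hy hz) (Rv_eq (not_eq_sym hxz) hzo hxo hz hx) (Rv_eq hxy hxo hyo hx hy).
        unfold Dd in *. rewrite (qsym hQ o x) (qsym hQ o y) (qsym hQ o z). f_equal; [f_equal|]; field; lra.
Qed.

End Crt.

Lemma Phibar_pos a b c : 0 < a -> 0 < b -> 0 < c ->
  Phibar (a, b, c) = (Finite (ln (b / c)), Finite (ln (c / a)), Finite (ln (a / b))).
Proof. intros. unfold Phibar. simpl. rewrite decP_T //. Qed.

Lemma ratio_eq mu p q r mu' p' q' r' : 0 < mu -> 0 < p -> 0 < q -> 0 < r ->
  0 < mu' -> 0 < p' -> 0 < q' -> 0 < r' ->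
  Phibar (mu * p, mu * q, mu * r) = Phibar (mu' * p', mu' * q', mu' * r') ->
  q * r' = q' * r /\ r * p' = r' * p.
Proof.
  intros h1 h2 h3 h4 h5 h6 h7 h8 e.
  rewrite !Phibar_pos in e; try (apply Rmult_lt_0_compat; auto).
  injection e as e1 e2 e3.
  replace (mu * q / (mu * r)) with (q / r) in e1 by (field; lra).
  replace (mu' * q' / (mu' * r')) with (q' / r') in e1 by (field; lra).
  replace (mu * r / (mu * p)) with (r / p) in e2 by (field; lra).
  replace (mu' * r' / (mu' * p')) with (r' / p') in e2 by (field; lra).
  have l1 := ln_inv _ _ (Rdiv_lt_0_compat _ _ h3 h4) (Rdiv_lt_0_compat _ _ h7 h8) e1.
  have l2 := ln_inv _ _ (Rdiv_lt_0_compat _ _ h4 h2) (Rdiv_lt_0_compat _ _ h8 h6) e2.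
  split.
  - have := f_equal (fun t => t * r * r') l1. intro h. field_simplify in h; lra.
  - have := f_equal (fun t => t * p * p') l2. intro h. field_simplify in h; lra.
Qed.

Lemma admissible_inj (X : Type) (n : nat) (P : 'I_n -> X) : injective P -> admissible P.
Proof. intros hP i j k hij hjk hik [e1 e2]. apply hij. apply hP. exact e1. Qed.

Lemma mkquad_inj (X : Type) (a b c e : X) : a <> b -> a <> c -> a <> e -> b <> c -> b <> e -> c <> e ->
  injective (mkquad a b c e).
Proof.
  intros h1 h2 h3 h4 h5 h6 i j.
  case: i => [[|[|[|[|i]]]] hi]; case: j => [[|[|[|[|j]]]] hj] //= e'; try (apply val_inj; done);
  rewrite /mkquad /= in e'; try congruence; try done.
Qed.

Lemma div_eq_cross A A' B B' : 0 < A' -> 0 < B' -> A * B' = A' * B -> A / A' = B / B'.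
Proof.
  intros h1 h2 e. replace (A / A') with (A * B' / (A' * B')) by (field; lra). rewrite e. field; lra.
Qed.

Section Part3.
Variables (X : Type) (d d' : X -> X -> Rbar) (K K' : R) (M : quad X -> Rbar * Rbar * Rbar).
Hypothesis h3 : at_least_three_points X.
Hypothesis hQ : QMs d K.
Hypothesis hQ' : QMs d' K'.
Hypothesis hI : induces d M.
Hypothesis hI' : induces d' M.

Lemma exists_common_fin : exists o, finp d o /\ finp d' o.
Proof.
  destruct h3 as [a0 _].
  set w := epsilon (inhabits a0) (is_inf d).
  set w' := epsilon (inhabits a0) (is_inf d').
  destruct (exists_other h3 w w') as [z [hz hz']].
  exists z. split; intro hi.
  - apply hz. apply (quniq hQ); auto. apply epsilon_spec. eauto.
  - apply hz'. apply (quniq hQ'); auto. apply epsilon_spec. eauto.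
Qed.

Lemma part3_gen : dimN d = dimN d'.
Proof.
  destruct exists_common_fin as [o [ho ho']].
  have e1 : dimN d = dimN (involution d o) by apply dimN_ext; intro n; apply (part2 hQ ho h3).
  have e2 : dimN d' = dimN (involution d' o) by apply dimN_ext; intro n; apply (part2 hQ' ho' h3).
  rewrite e1 e2.
  set L := fun u v => Rv d o u v / Rv d' o u v.
  have Rp := Rv_pos hQ ho. have Rp' := Rv_pos hQ' ho'.
  have Lsym : forall u v, L u v = L v u.
  { intros u v. unfold L, Rv. rewrite (rho_sym o hQ) (rho_sym o hQ') //. }
  have Ltri : forall x y z, x <> y -> y <> z -> x <> z -> x <> o -> y <> o -> z <> o ->
      L y z = L x y /\ L z x = L x y.
  { intros x y z hxy hyz hxz hxo hyo hzo.
    destruct (crt_rho hQ ho hxy hyz hxz hxo hyo hzo) as [mu [hmu e]].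
    destruct (crt_rho hQ' ho' hxy hyz hxz hxo hyo hzo) as [mu' [hmu' e']].
    have hP : admissible (mkquad o x y z).
    { apply admissible_inj, mkquad_inj; auto. }
    have := hI hP. rewrite e. have := hI' hP. rewrite e'. intros h1 h2. rewrite h1 in h2.
    have [r1 r2] := ratio_eq hmu (Rp _ _ hyo hzo hyz) (Rp _ _ hzo hxo (not_eq_sym hxz)) (Rp _ _ hxo hyo hxy)
        hmu' (Rp' _ _ hyo hzo hyz) (Rp' _ _ hzo hxo (not_eq_sym hxz)) (Rp' _ _ hxo hyo hxy) (esym h2).
    have a1 := Rp _ _ hyo hzo hyz. have a2 := Rp _ _ hzo hxo (not_eq_sym hxz). have a3 := Rp _ _ hxo hyo hxy.
    have b1 := Rp' _ _ hyo hzo hyz. have b2 := Rp' _ _ hzo hxo (not_eq_sym hxz). have b3 := Rp' _ _ hxo hyo hxy.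
    unfold L. split.
    - symmetry. apply div_eq_cross; auto.
    - apply div_eq_cross; auto. }
  destruct (exists_other h3 o o) as [a [hao _]].
  destruct (exists_other h3 o a) as [b [hbo hba]].
  set lam := L a b.
  have Lc : forall u v, u <> v -> u <> o -> v <> o -> L u v = lam.
  { intros u v huv huo hvo. unfold lam.
    destruct (classic (u = a)) as [ua|ua].
    - subst u. destruct (classic (v = b)) as [vb|vb]. subst; auto.
      have [t1 t2] := Ltri a b v (not_eq_sym hba) (not_eq_sym vb) huv hao hbo hvo.
      rewrite -t2 Lsym //.
    - destruct (classic (u = b)) as [ub|ub].
      + subst u. destruct (classic (v = a)) as [va|va]. subst; apply Lsym.
        have [t1 t2] := Ltri a b v (not_eq_sym hba) huv (not_eq_sym va) hao hbo hvo. auto.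
      + have [t1 t2] := Ltri a b u (not_eq_sym hba) (not_eq_sym ub) (not_eq_sym ua) hao hbo huo.
        destruct (classic (v = a)) as [va|va]. subst v. rewrite t2 //.
        destruct (classic (v = b)) as [vb|vb]. subst v. rewrite Lsym t1 //.
        have [t3 t4] := Ltri b u v (not_eq_sym ub) huv (not_eq_sym vb) hbo huo hvo.
        rewrite t3 t1 //. }
  have hlam : 0 < lam by unfold lam, L; apply Rdiv_lt_0_compat; auto.
  have eq : involution d o = rescale lam (involution d' o).
  { apply functional_extensionality; intro x; apply functional_extensionality; intro y.
    unfold rescale. fold (rho d o) (rho d' o).
    destruct (classic (x = y)) as [e|e]. { subst. rewrite !rho_diag /=. f_equal; ring. }
    destruct (classic (x = o)) as [xo|xo].
    { subst. rewrite (rho_sym o hQ) (rho_sym o hQ') (rho_o hQ ho (not_eq_sym e)) (rho_o hQ' ho' (not_eq_sym e)) Rbar_mult_pinf //. }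
    destruct (classic (y = o)) as [yo|yo].
    { subst. rewrite (rho_o hQ ho e) (rho_o hQ' ho' e) Rbar_mult_pinf //. }
    rewrite (rho_finv hQ ho xo yo) (rho_finv hQ' ho' xo yo) /=. f_equal.
    have := Lc x y e xo yo. unfold L. have := Rp' x y xo yo e. intros hp hl. rewrite -hl. field. lra. }
  rewrite eq. symmetry. apply dimN_rescale; auto.
Qed.

End Part3.

Section Transport.
Variables (A B : Type) (f : A -> B) (g : B -> A) (dB : B -> B -> Rbar).
Hypothesis fg : cancel f g.
Hypothesis gf : cancel g f.
Definition dT := fun x y => dB (f x) (f y).

Lemma inf_tr x : is_inf dT x <-> is_inf dB (f x).
Proof.
  split; intros h y hy.
  - rewrite -(gf y). apply h. intro e; apply hy; rewrite -e gf //.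
  - apply h. intro e; apply hy. rewrite -(fg y) e fg //.
Qed.

Lemma finp_tr x : finp dT x <-> finp dB (f x).
Proof. unfold finp. have := inf_tr x. tauto. Qed.

Lemma f_inj : injective f.
Proof. intros x y e. rewrite -(fg x) e fg //. Qed.

Lemma QMs_tr K : QMs dB K -> QMs dT K.
Proof.
  intro hQ. constructor.
  - exact (qK hQ).
  - intros x y. apply (qsym hQ).
  - intros x y hx hy. apply finp_tr in hx. apply finp_tr in hy. exact (qfin hQ hx hy).
  - intros x y. apply (qnn hQ).
  - intros x y hx hy e. apply finp_tr in hx. apply finp_tr in hy. apply f_inj. exact (qzero hQ hx hy e).
  - intro x. apply (qdiag hQ).
  - intros x y z hx hy hz. apply finp_tr in hx. apply finp_tr in hy. apply finp_tr in hz. exact (qq hQ hx hy hz).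
  - intros x y hx hy. apply inf_tr in hx. apply inf_tr in hy. apply f_inj. exact (quniq hQ hx hy).
Qed.

Lemma infpair_tr u v : infpair dB (f u) (f v) = infpair dT u v.
Proof.
  unfold infpair. f_equal. apply propositional_extensionality.
  have h1 := inf_tr u. have h2 := inf_tr v.
  have h3 : f u <> f v <-> u <> v by split; intros h e; apply h; [rewrite e | apply f_inj]; auto.
  tauto.
Qed.

Lemma crt_tr (P : quad A) : crt_d dB (fun i => f (P i)) = crt_d dT P.
Proof.
  unfold crt_d, crt_prod, ninf, fpart. cbv beta. rewrite !infpair_tr. reflexivity.
Qed.

Lemma admissible_tr n (P : 'I_n -> A) : admissible P -> admissible (fun i => f (P i)).
Proof.
  intros hP i j k hij hjk hik [e1 e2]. apply (hP i j k hij hjk hik). split; apply f_inj; auto.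
Qed.

End Transport.

Theorem theorem1p2 (X : Type) (HX : at_least_three_points X)
  (d : X -> X -> Rbar) (Hd : quasi_metric d) :
  (* rescaling *)
  (forall lam : R, (0 < lam)%R -> dimN d = dimN (rescale lam d)) /\
  (* involution at a point o which is not the point at infinity of d *)
  (forall o : X, ~ is_inf d o -> dimN d = dimN (involution d o)) /\
  (* two quasi-metrics inducing the same intrinsic Moebius structure *)
  (forall M : quad X -> Rbar * Rbar * Rbar,
     mobius_structure M -> intrinsic M -> induces d M ->
     forall d' : X -> X -> Rbar, quasi_metric d' -> induces d' M ->
     dimN d = dimN d') /\
  (* invariance under Moebius equivalence of intrinsic Moebius spaces *)
  (forall (M : quad X -> Rbar * Rbar * Rbar) (X' : Type)
          (M' : quad X' -> Rbar * Rbar * Rbar) (d' : X' -> X' -> Rbar)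
          (f : X -> X'),
     at_least_three_points X' ->
     mobius_structure M -> intrinsic M -> induces d M ->
     mobius_structure M' -> intrinsic M' -> quasi_metric d' -> induces d' M' ->
     mobius_equivalence M M' f ->
     dimN d = dimN d').
Proof.
  destruct (QMs_of_qm HX Hd) as [K hQ].
  split; [|split; [|split]].
  - intros lam hl. apply dimN_rescale; auto.
  - intros o ho. apply dimN_ext; intro n. apply (part2 hQ ho HX).
  - intros M _ _ hI d' hd' hI'. destruct (QMs_of_qm HX hd') as [K' hQ'].
    exact (part3_gen HX hQ hQ' hI hI').
  - intros M X' M' d' f HX' _ _ hI _ _ hd' hI' [[g fg gf] hME].
    destruct (QMs_of_qm HX' hd') as [K' hQ'].
    have hQA := QMs_tr fg gf hQ'.
    have hIA : induces (dT f d') M.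
    { intros P hP. rewrite -(hME P hP) (hI' _ (admissible_tr fg hP)) (crt_tr d' fg gf) //. }
    rewrite (part3_gen HX hQ hQA hI hIA).
    unfold dimN. apply Rbar_glb_rw. intro r; split; intros [n [h1 h2]]; exists n; split; auto.
    + apply (witness_transport (f := g) (g := f) (dB := dT f d') gf fg); auto. intros x y. unfold dT. rewrite !gf //.
    + apply (witness_transport (f := f) (g := g) (dB := d') fg gf); auto.
Qed.
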